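(* Let $A\in M_2(\mathbb{Z})$ be an expanding matrix whose characteristic polynomial is $x^2+px+q$ with $p$ a positive integer and $q\in\{3,-3\}$. Let $k\in\mathbb{Z}\setminus\{0\}$ and let $v\in\mathbb{R}^2$ be such that $\{v,Av\}$ is linearly independent. Let $\mathcal{D}=\{0,v,kAv\}$. Then $T(A,\mathcal{D})$ is connected if and only if $k=\pm1$.
   Context: A real square matrix is expanding if all its eigenvalues have modulus strictly larger than $1$. For an expanding matrix $A\in M_n(\mathbb{Z})$ and a finite set $\mathcal{D}\subset\mathbb{R}^n$ with $|\mathcal D|=|\det A|$, the self-affine set $T(A,\mathcal{D})$ is the unique nonempty compact set $T$ with $AT=T+\mathcal{D}$; equivalently $T=\{\sum_{i=1}^\infty A^{-i}d_{j_i}: d_{j_i}\in\mathcal{D}\}$. *)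

(* Defs.v *)
From Stdlib Require Import Reals Lra ZArith List.
Open Scope R_scope.

Definition pt := (R * R)%type.

Definition padd (x y : pt) : pt := (fst x + fst y, snd x + snd y).
Definition pscale (c : R) (x : pt) : pt := (c * fst x, c * snd x).
Definition pzero : pt := (0, 0).

Record mat2 := Mat2 { m11 : R; m12 : R; m21 : R; m22 : R }.

Definition mapply (M : mat2) (x : pt) : pt :=
  (m11 M * fst x + m12 M * snd x, m21 M * fst x + m22 M * snd x).

Definition mdet (M : mat2) : R := m11 M * m22 M - m12 M * m21 M.
Definition mtr (M : mat2) : R := m11 M + m22 M.

Definition matZ (a b c d : Z) : mat2 := Mat2 (IZR a) (IZR b) (IZR c) (IZR d).

Definition minv (M : mat2) : mat2 :=
  Mat2 (m22 M / mdet M) (- m12 M / mdet M) (- m21 M / mdet M) (m11 M / mdet M).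

Definition mpow_apply (M : mat2) (n : nat) (x : pt) : pt := Nat.iter n (mapply M) x.

(* Complex eigenvalue lambda = re + i im of M: a root of the characteristic
   polynomial det(lambda I - M) = lambda^2 - tr(M) lambda + det(M),
   written out in real and imaginary parts. *)
Definition is_eigenvalue (M : mat2) (re im : R) : Prop :=
  re * re - im * im - mtr M * re + mdet M = 0 /\
  2 * re * im - mtr M * im = 0.

Definition expanding (M : mat2) : Prop :=
  forall re im, is_eigenvalue M re im -> re * re + im * im > 1.

Definition lin_indep2 (u w : pt) : Prop :=
  forall al be : R, padd (pscale al u) (pscale be w) = pzero -> al = 0 /\ be = 0.

(* partial sums  sum_{i=1}^{n} A^{-i} d_i  where the digit d_i is dig (i-1) *)
Fixpoint partial_sum (A : mat2) (dig : nat -> pt) (n : nat) : pt :=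
  match n with
  | O => pzero
  | S m => padd (partial_sum A dig m) (mpow_apply (minv A) (S m) (dig m))
  end.

(* The self-affine set T(A, D) = { sum_{i>=1} A^{-i} d_{j_i} : d_{j_i} in D } *)
Definition self_affine_set (A : mat2) (D : list pt) : pt -> Prop :=
  fun x => exists dig : nat -> pt,
    (forall i, In (dig i) D) /\
    Un_cv (fun n => fst (partial_sum A dig n)) (fst x) /\
    Un_cv (fun n => snd (partial_sum A dig n)) (snd x).

Definition dist2 (x y : pt) : R :=
  sqrt ((fst x - fst y) ^ 2 + (snd x - snd y) ^ 2).

Definition open2 (U : pt -> Prop) : Prop :=
  forall x, U x -> exists eps, eps > 0 /\ forall y, dist2 x y < eps -> U y.

Definition connected2 (S : pt -> Prop) : Prop :=
  ~ exists U V : pt -> Prop,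
      open2 U /\ open2 V /\
      (forall x, S x -> U x \/ V x) /\
      (exists x, S x /\ U x) /\ (exists x, S x /\ V x) /\
      (forall x, S x -> U x -> V x -> False).

(* Main.v *)
Require Import Defs.
From Stdlib Require Import Reals Lra Lia Psatz ZArith List Classical ClassicalEpsilon.
Open Scope R_scope.

Module M_A.

Definition psub (x y : pt) : pt := (fst x - fst y, snd x - snd y).
Definition Nv (x : pt) : R := Rabs (fst x) + Rabs (snd x).
Definition conv (u : nat -> pt) (x : pt) : Prop :=
  Un_cv (fun n => fst (u n)) (fst x) /\ Un_cv (fun n => snd (u n)) (snd x).

Lemma Nv_nonneg x : 0 <= Nv x.
Proof. unfold Nv; pose proof (Rabs_pos (fst x)); pose proof (Rabs_pos (snd x)); lra. Qed.

Lemma dist2_le x y : dist2 x y <= Nv (psub x y).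
Proof.
  unfold dist2, Nv, psub; simpl.
  set (a := fst x - fst y); set (b := snd x - snd y).
  rewrite <- (sqrt_pow2 (Rabs a + Rabs b)).
  2: pose proof (Rabs_pos a); pose proof (Rabs_pos b); lra.
  apply sqrt_le_1_alt.
  pose proof (Rabs_pos a); pose proof (Rabs_pos b).
  assert (a ^ 2 = Rabs a ^ 2) by (rewrite <- (pow2_abs a); reflexivity).
  assert (b ^ 2 = Rabs b ^ 2) by (rewrite <- (pow2_abs b); reflexivity).
  nra.
Qed.

Lemma abs_le_sqrt a b : Rabs a <= sqrt (a ^ 2 + b ^ 2).
Proof.
  rewrite <- (sqrt_pow2 (Rabs a)) by apply Rabs_pos.
  apply sqrt_le_1_alt. rewrite <- (pow2_abs a). nra.
Qed.

Lemma fst_le_dist2 x y : Rabs (fst x - fst y) <= dist2 x y.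
Proof. unfold dist2; apply abs_le_sqrt. Qed.
Lemma snd_le_dist2 x y : Rabs (snd x - snd y) <= dist2 x y.
Proof. unfold dist2; rewrite Rplus_comm; apply abs_le_sqrt. Qed.

Lemma Nv_le_dist2 x y : Nv (psub x y) <= 2 * dist2 x y.
Proof. unfold Nv, psub; simpl. pose proof (fst_le_dist2 x y); pose proof (snd_le_dist2 x y); lra. Qed.

Definition mnorm (M : mat2) : R :=
  Rabs (m11 M) + Rabs (m12 M) + Rabs (m21 M) + Rabs (m22 M).

Lemma mnorm_nonneg M : 0 <= mnorm M.
Proof. unfold mnorm. pose proof (Rabs_pos (m11 M)); pose proof (Rabs_pos (m12 M));
  pose proof (Rabs_pos (m21 M)); pose proof (Rabs_pos (m22 M)); lra. Qed.

Lemma abs_lin a b x y : Rabs (a * x + b * y) <= Rabs a * Rabs x + Rabs b * Rabs y.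
Proof.
  eapply Rle_trans; [apply Rabs_triang|]. rewrite !Rabs_mult; lra.
Qed.

Lemma mapply_lip M x y :
  Nv (psub (mapply M x) (mapply M y)) <= mnorm M * Nv (psub x y).
Proof.
  unfold Nv, psub, mapply, mnorm; simpl.
  replace (m11 M * fst x + m12 M * snd x - (m11 M * fst y + m12 M * snd y))
    with (m11 M * (fst x - fst y) + m12 M * (snd x - snd y)) by ring.
  replace (m21 M * fst x + m22 M * snd x - (m21 M * fst y + m22 M * snd y))
    with (m21 M * (fst x - fst y) + m22 M * (snd x - snd y)) by ring.
  pose proof (abs_lin (m11 M) (m12 M) (fst x - fst y) (snd x - snd y)).
  pose proof (abs_lin (m21 M) (m22 M) (fst x - fst y) (snd x - snd y)).
  pose proof (Rabs_pos (m11 M)); pose proof (Rabs_pos (m12 M));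
  pose proof (Rabs_pos (m21 M)); pose proof (Rabs_pos (m22 M)).
  pose proof (Rabs_pos (fst x - fst y)); pose proof (Rabs_pos (snd x - snd y)).
  nra.
Qed.

Lemma open_preimage M U : open2 U -> open2 (fun x => U (mapply M x)).
Proof.
  intros HU x Hx. destruct (HU _ Hx) as [eps [Heps H]].
  pose proof (mnorm_nonneg M) as Hm.
  exists (eps / (2 * mnorm M + 1)). split.
  - apply Rdiv_lt_0_compat; lra.
  - intros y Hy. apply H.
    pose proof (dist2_le (mapply M x) (mapply M y)).
    pose proof (mapply_lip M x y). pose proof (Nv_le_dist2 x y).
    assert (Hd : 0 <= dist2 x y) by apply sqrt_pos.
    assert (Hy' : dist2 x y * (2 * mnorm M + 1) < eps).
    { apply (Rmult_lt_compat_r (2 * mnorm M + 1)) in Hy; [|lra].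
      unfold Rdiv in Hy. rewrite Rmult_assoc, Rinv_l in Hy; lra. }
    nra.
Qed.

Lemma connected_transfer (SA SB : pt -> Prop) (L Li : mat2) :
  (forall x, mapply L (mapply Li x) = x) ->
  (forall x, mapply Li (mapply L x) = x) ->
  (forall x, SA x <-> SB (mapply Li x)) ->
  (connected2 SA <-> connected2 SB).
Proof.
  intros H1 H2 HS. split; intros HC [U [V [HU [HV [Hcov [[a [Ha1 Ha2]] [[b [Hb1 Hb2]] Hdis]]]]]]]; apply HC.
  - exists (fun x => U (mapply Li x)), (fun x => V (mapply Li x)).
    split; [apply open_preimage; auto|]. split; [apply open_preimage; auto|].
    split; [intros x Hx; apply Hcov; apply HS; auto|].
    split; [exists (mapply L a); rewrite HS, H2; auto|].
    split; [exists (mapply L b); rewrite HS, H2; auto|].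
    intros x Hx; apply Hdis; apply HS; auto.
  - exists (fun x => U (mapply L x)), (fun x => V (mapply L x)).
    split; [apply open_preimage; auto|]. split; [apply open_preimage; auto|].
    split; [intros x Hx; apply Hcov; apply HS; rewrite H2; auto|].
    split; [exists (mapply Li a); split; [apply HS; auto|rewrite H1; auto]|].
    split; [exists (mapply Li b); split; [apply HS; auto|rewrite H1; auto]|].
    intros x Hx; apply Hdis; apply HS; rewrite H2; auto.
Qed.

Lemma cv_const c : Un_cv (fun _ => c) c.
Proof. intros e He; exists O; intros; unfold R_dist; rewrite Rminus_diag, Rabs_R0; lra. Qed.

Lemma conv_mapply M u x : conv u x -> conv (fun n => mapply M (u n)) (mapply M x).
Proof.
  intros [H1 H2]; split; simpl; apply CV_plus; apply CV_mult; auto; apply cv_const.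
Qed.

Lemma conv_ext u u' x : (forall n, u n = u' n) -> conv u x -> conv u' x.
Proof.
  intros He [H1 H2]; split; intros e He'; [destruct (H1 e He') as [N HN]|destruct (H2 e He') as [N HN]];
  exists N; intros n Hn; rewrite <- He; auto.
Qed.

Lemma cv_le u l b : Un_cv u l -> (forall n, u n <= b) -> l <= b.
Proof. intros Hu Hb. apply (@Rle_cv_lim u (fun _ => b)); auto; apply cv_const. Qed.
Lemma cv_ge u l b : Un_cv u l -> (forall n, b <= u n) -> b <= l.
Proof. intros Hu Hb. apply (@Rle_cv_lim (fun _ => b) u); auto; apply cv_const. Qed.

Lemma cv_shift u l m : Un_cv (fun j => u (m + j)%nat) l -> Un_cv u l.
Proof.
  intros H e He. destruct (H e He) as [N HN]. exists (m + N)%nat. intros n Hn.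
  replace n with (m + (n - m))%nat by lia. apply HN. lia.
Qed.

Lemma cv_le_ev u l b N : Un_cv u l -> (forall n, (N <= n)%nat -> u n <= b) -> l <= b.
Proof.
  intros Hu Hb. apply (cv_le (fun j => u (N + j)%nat)).
  - intros e He. destruct (Hu e He) as [M HM]. exists M. intros n Hn. apply HM. lia.
  - intros; apply Hb; lia.
Qed.
Lemma cv_ge_ev u l b N : Un_cv u l -> (forall n, (N <= n)%nat -> b <= u n) -> b <= l.
Proof.
  intros Hu Hb. apply (cv_ge (fun j => u (N + j)%nat)).
  - intros e He. destruct (Hu e He) as [M HM]. exists M. intros n Hn. apply HM. lia.
  - intros; apply Hb; lia.
Qed.

End M_A.
Import M_A.

Module M_B.

Definition adm (P Q : R) : Prop :=
  (Q = 3 /\ (P = 1 \/ P = 2 \/ P = 3)) \/ (Q = -3 /\ P = 1).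
Definition recs (P Q : R) (u : nat -> R) : Prop :=
  forall n, u (S (S n)) = - (P * u (S n) + u n) / Q.
Definition rho : R := 9/10.

Lemma rho_pow_pos n : 0 < rho ^ n.
Proof. apply pow_lt; unfold rho; lra. Qed.
Lemma rho_pow_le n : rho ^ S n <= rho ^ n.
Proof. simpl. pose proof (rho_pow_pos n). unfold rho in *; nra. Qed.

Lemma sq_le_abs a b : 0 <= b -> a ^ 2 <= b ^ 2 -> Rabs a <= b.
Proof.
  intros Hb H. rewrite <- (Rabs_right b) by lra. apply Rsqr_le_abs_0. unfold Rsqr. simpl in H. lra.
Qed.

Definition Fq (P x y : R) := y ^ 2 + P / 3 * x * y + x ^ 2 / 3.

Lemma decay_complex P u : (P = 1 \/ P = 2 \/ P = 3) -> recs P 3 u ->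
  forall n, Rabs (u n) <= 4 * (Rabs (u O) + Rabs (u 1%nat)) * rho ^ n.
Proof.
  intros HP Hr.
  assert (HF : forall n, Fq P (u n) (u (S n)) = Fq P (u O) (u 1%nat) * (1/3) ^ n).
  { induction n; [simpl; ring|].
    replace (Fq P (u O) (u 1%nat) * (1/3) ^ S n) with (Fq P (u O) (u 1%nat) * (1/3) ^ n * (1/3)) by (simpl; ring).
    rewrite <- IHn. unfold Fq. rewrite Hr. field. }
  intros n.
  set (c := Rabs (u O) + Rabs (u 1%nat)).
  assert (Hc : 0 <= c) by (unfold c; pose proof (Rabs_pos (u O)); pose proof (Rabs_pos (u 1%nat)); lra).
  assert (H0 : Fq P (u O) (u 1%nat) <= c ^ 2).
  { unfold Fq, c. pose proof (Rabs_pos (u O)); pose proof (Rabs_pos (u 1%nat)).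
    assert (E1 : u O ^ 2 = Rabs (u O) ^ 2) by (rewrite pow2_abs; auto).
    assert (E2 : u 1%nat ^ 2 = Rabs (u 1%nat) ^ 2) by (rewrite pow2_abs; auto).
    pose proof (Rle_abs (u O * u 1%nat)). pose proof (Rle_abs (- (u O * u 1%nat))).
    rewrite Rabs_Ropp, Rabs_mult in *.
    destruct HP as [-> | [-> | ->]]; nra. }
  assert (H1 : u n ^ 2 <= 12 * Fq P (u n) (u (S n))).
  { unfold Fq. pose proof (pow2_ge_0 (u (S n) + P * u n / 6)). pose proof (pow2_ge_0 (u n)).
    destruct HP as [-> | [-> | ->]]; nra. }
  assert (Hp : (1/3) ^ n <= (81/100) ^ n).
  { apply pow_incr; lra. }
  assert (Hr2 : (81/100) ^ n = rho ^ n * rho ^ n).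
  { rewrite <- Rpow_mult_distr. unfold rho. f_equal; lra. }
  assert (Hpos : 0 <= (1/3)^n) by (apply pow_le; lra).
  assert (HFn : 0 <= Fq P (u O) (u 1%nat)).
  { unfold Fq. pose proof (pow2_ge_0 (u 1%nat + P * u O / 6)). pose proof (pow2_ge_0 (u O)).
    destruct HP as [-> | [-> | ->]]; nra. }
  assert (Hb : u n ^ 2 <= (4 * c * rho ^ n) ^ 2).
  { rewrite HF in H1. pose proof (rho_pow_pos n).
    assert (Fq P (u O) (u 1%nat) * (1/3)^n <= c^2 * (81/100)^n).
    { apply Rmult_le_compat; auto. }
    rewrite Hr2 in H2. nra. }
  pose proof (rho_pow_pos n).
  apply sq_le_abs; auto. pose proof (rho_pow_pos n). nra.
Qed.

Lemma decay_real u : recs 1 (-3) u ->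
  forall n, Rabs (u n) <= 4 * (Rabs (u O) + Rabs (u 1%nat)) * rho ^ n.
Proof.
  intros Hr.
  set (c := Rabs (u O) + Rabs (u 1%nat)).
  assert (Hc : 0 <= c) by (unfold c; pose proof (Rabs_pos (u O)); pose proof (Rabs_pos (u 1%nat)); lra).
  assert (H : forall n, Rabs (u n) <= 10/9 * c * rho ^ n /\ Rabs (u (S n)) <= 10/9 * c * rho ^ S n).
  { induction n.
    - unfold c, rho; simpl; pose proof (Rabs_pos (u O)); pose proof (Rabs_pos (u 1%nat)); lra.
    - destruct IHn as [H1 H2]. split; auto.
      rewrite Hr. replace (- (1 * u (S n) + u n) / -3) with ((u (S n) + u n) / 3) by field.
      unfold Rdiv. rewrite Rabs_mult, (Rabs_right (/3)) by lra.
      pose proof (Rabs_triang (u (S n)) (u n)).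
      pose proof (rho_pow_pos n).
      assert (E1 : rho ^ S (S n) = rho ^ n * (81/100)).
      { simpl. set (r := rho ^ n). unfold rho. lra. }
      assert (E2 : rho ^ S n = rho ^ n * (9/10)).
      { simpl. set (r := rho ^ n). unfold rho. lra. }
      rewrite E1. rewrite E2 in H2.
      nra. }
  intros n. destruct (H n) as [H1 _]. pose proof (rho_pow_pos n). nra.
Qed.

Lemma decay P Q u : adm P Q -> recs P Q u ->
  forall n, Rabs (u n) <= 4 * (Rabs (u O) + Rabs (u 1%nat)) * rho ^ n.
Proof.
  intros [[-> HP] | [-> ->]] Hr.
  - apply (decay_complex P); auto.
  - apply decay_real; auto.
Qed.

End M_B.
Import M_B.

Module M_C.

Lemma mapply_padd M x y : mapply M (padd x y) = padd (mapply M x) (mapply M y).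
Proof. unfold mapply, padd; simpl; f_equal; ring. Qed.
Lemma mapply_pscale M c x : mapply M (pscale c x) = pscale c (mapply M x).
Proof. unfold mapply, pscale; simpl; f_equal; ring. Qed.
Lemma mapply_pzero M : mapply M pzero = pzero.
Proof. unfold mapply, pzero; simpl; f_equal; ring. Qed.
Lemma mapply_psub M x y : mapply M (psub x y) = psub (mapply M x) (mapply M y).
Proof. unfold mapply, psub; simpl; f_equal; ring. Qed.

Lemma mpow_S M n x : mpow_apply M (S n) x = mapply M (mpow_apply M n x).
Proof. reflexivity. Qed.
Lemma mpow_S' M n x : mpow_apply M (S n) x = mpow_apply M n (mapply M x).
Proof. unfold mpow_apply. apply Nat.iter_succ_r. Qed.
Lemma mpow_padd M n x y : mpow_apply M n (padd x y) = padd (mpow_apply M n x) (mpow_apply M n y).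
Proof. induction n; [reflexivity|]. rewrite !mpow_S, IHn, mapply_padd; reflexivity. Qed.
Lemma mpow_pscale M n c x : mpow_apply M n (pscale c x) = pscale c (mpow_apply M n x).
Proof. induction n; [reflexivity|]. rewrite !mpow_S, IHn, mapply_pscale; reflexivity. Qed.
Lemma mpow_psub M n x y : mpow_apply M n (psub x y) = psub (mpow_apply M n x) (mpow_apply M n y).
Proof. induction n; [reflexivity|]. rewrite !mpow_S, IHn, mapply_psub; reflexivity. Qed.
Lemma mpow_pzero M n : mpow_apply M n pzero = pzero.
Proof. induction n; [reflexivity|]. rewrite !mpow_S, IHn, mapply_pzero; reflexivity. Qed.

Lemma Nv_triang x y : Nv (padd x y) <= Nv x + Nv y.
Proof. unfold Nv, padd; simpl. pose proof (Rabs_triang (fst x) (fst y)); pose proof (Rabs_triang (snd x) (snd y)); lra. Qed.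
Lemma Nv_psub_padd a b x y : Nv (psub (padd a x) (padd b y)) <= Nv (psub a b) + Nv x + Nv y.
Proof.
  unfold Nv, psub, padd; simpl.
  replace (fst a + fst x - (fst b + fst y)) with ((fst a - fst b) + (fst x + - fst y)) by ring.
  replace (snd a + snd x - (snd b + snd y)) with ((snd a - snd b) + (snd x + - snd y)) by ring.
  pose proof (Rabs_triang (fst a - fst b) (fst x + - fst y)).
  pose proof (Rabs_triang (snd a - snd b) (snd x + - snd y)).
  pose proof (Rabs_triang (fst x) (- fst y)); pose proof (Rabs_triang (snd x) (- snd y)).
  rewrite Rabs_Ropp in *. lra.
Qed.
Lemma Nv_psub_padd_same a b x : Nv (psub (padd a x) (padd b x)) = Nv (psub a b).
Proof. unfold Nv, psub, padd; simpl. f_equal; f_equal; ring. Qed.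

Section BW.
Variables P Q : R.
Hypothesis HPQ : adm P Q.

Lemma HQ : Q <> 0.
Proof. destruct HPQ as [[-> _]|[-> _]]; lra. Qed.

Definition Bm := Mat2 0 (-Q) 1 (-P).
Definition binv z := mapply (minv Bm) z.
Definition ip n z := mpow_apply (minv Bm) n z.

Lemma binv_eq z : binv z = ((-P * fst z + Q * snd z) / Q, - fst z / Q).
Proof.
  pose proof HQ. unfold binv, minv, mapply, mdet, Bm; simpl.
  f_equal; field; intro; apply H; lra.
Qed.

Lemma binv_Bm z : binv (mapply Bm z) = z.
Proof. pose proof HQ. rewrite binv_eq. destruct z as [x y]; unfold mapply, Bm; simpl. f_equal; field; auto. Qed.

Lemma Bm_binv z : mapply Bm (binv z) = z.
Proof. pose proof HQ. rewrite binv_eq. destruct z as [x y]; unfold mapply, Bm; simpl. f_equal; field; auto. Qed.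

Lemma binv2 z : binv (binv z) = pscale (-1/Q) (padd (pscale P (binv z)) z).
Proof. pose proof HQ. rewrite !binv_eq. destruct z as [x y]. unfold pscale, padd; simpl. f_equal; field; auto. Qed.

Lemma ip_S n z : ip (S n) z = binv (ip n z).
Proof. reflexivity. Qed.

Lemma rec_fst z : recs P Q (fun n => fst (ip n z)).
Proof.
  pose proof HQ. intro n. rewrite !ip_S, binv2. unfold pscale, padd; cbn [fst snd]. field; auto.
Qed.
Lemma rec_snd z : recs P Q (fun n => snd (ip n z)).
Proof.
  pose proof HQ. intro n. rewrite !ip_S, binv2. unfold pscale, padd; cbn [fst snd]. field; auto.
Qed.

Lemma PQ_bound : Rabs (P / Q) <= 1 /\ Rabs (1 / Q) <= 1 /\ Rabs (Q / Q) <= 1.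
Proof.
  destruct HPQ as [[-> [-> | [-> | ->]]]|[-> ->]];
  repeat split; apply Rabs_le; split; lra.
Qed.

Lemma Nv_ip n z : Nv (ip n z) <= 16 * Nv z * rho ^ n.
Proof.
  pose proof (decay P Q _ HPQ (rec_fst z) n) as H1.
  pose proof (decay P Q _ HPQ (rec_snd z) n) as H2.
  assert (E0 : ip 0 z = z) by reflexivity. assert (E1' : ip 1 z = binv z) by reflexivity.
  cbv beta in H1, H2. rewrite E0, E1', binv_eq in H1, H2. cbn [fst snd] in H1, H2.
  destruct PQ_bound as [B1 [B2 B3]].
  assert (E1 : Rabs ((- P * fst z + Q * snd z) / Q) <= Rabs (fst z) + Rabs (snd z)).
  { replace ((- P * fst z + Q * snd z) / Q) with (- (P/Q) * fst z + (Q/Q) * snd z) by (field; apply HQ).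
    eapply Rle_trans; [apply abs_lin|]. rewrite Rabs_Ropp.
    pose proof (Rabs_pos (fst z)); pose proof (Rabs_pos (snd z)). nra. }
  assert (E2 : Rabs (- fst z / Q) <= Rabs (fst z)).
  { replace (- fst z / Q) with (- (1/Q) * fst z) by (field; apply HQ).
    rewrite Rabs_mult, Rabs_Ropp. pose proof (Rabs_pos (fst z)). nra. }
  pose proof (rho_pow_pos n). unfold Nv.
  pose proof (Rabs_pos (fst z)); pose proof (Rabs_pos (snd z)).
  nra.
Qed.

Variable K : R.
Definition DB : list pt := pzero :: (1, 0) :: (0, K) :: nil.
Definition valid (dig : nat -> pt) := forall i, In (dig i) DB.
Definition Dm := 1 + Rabs K.

Lemma Dm_pos : 0 < Dm.
Proof. unfold Dm; pose proof (Rabs_pos K); lra. Qed.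

Lemma DB_bound d : In d DB -> Nv d <= Dm.
Proof.
  unfold DB, Dm, Nv; simpl; intros [<-|[<-|[<-|[]]]]; simpl; rewrite ?Rabs_R0, ?Rabs_R1;
  pose proof (Rabs_pos K); lra.
Qed.

Definition ps dig n := partial_sum Bm dig n.

Lemma ps_S dig n : ps dig (S n) = padd (ps dig n) (ip (S n) (dig n)).
Proof. reflexivity. Qed.

Lemma ps_agree dig dig' n : (forall i, (i < n)%nat -> dig i = dig' i) -> ps dig n = ps dig' n.
Proof.
  induction n; intros H; [reflexivity|]. rewrite !ps_S, IHn, H; auto.
Qed.

Lemma Nv_ip_dig d n : In d DB -> Nv (ip n d) <= 16 * Dm * rho ^ n.
Proof.
  intros Hd. eapply Rle_trans; [apply Nv_ip|]. pose proof (DB_bound d Hd). pose proof (rho_pow_pos n).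
  pose proof (Nv_nonneg d). nra.
Qed.

Lemma diff_bound dig dig' n : valid dig -> valid dig' ->
  (forall i, (i < n)%nat -> dig i = dig' i) ->
  forall m, Nv (psub (ps dig m) (ps dig' m)) <= 320 * Dm * rho ^ n.
Proof.
  intros Hv Hv' Ha.
  assert (H : forall m, Nv (psub (ps dig m) (ps dig' m)) <= 320 * Dm * (rho ^ n - rho ^ (Nat.max n m))).
  { induction m.
    - rewrite Nat.max_0_r. unfold ps; simpl. unfold Nv, psub, pzero; simpl.
      rewrite Rminus_diag, Rabs_R0. pose proof Dm_pos. lra.
    - rewrite !ps_S. destruct (lt_dec m n) as [Hl|Hl].
      + rewrite (Ha m Hl), Nv_psub_padd_same.
        replace (Nat.max n (S m)) with n by lia. replace (Nat.max n m) with n in IHm by lia. exact IHm.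
      + eapply Rle_trans; [apply Nv_psub_padd|].
        pose proof (Nv_ip_dig _ (S m) (Hv m)). pose proof (Nv_ip_dig _ (S m) (Hv' m)).
        replace (Nat.max n (S m)) with (S m) by lia. replace (Nat.max n m) with m in IHm by lia.
        pose proof Dm_pos. pose proof (rho_pow_pos m).
        assert (rho ^ S m = 9/10 * rho ^ m) by (simpl; unfold rho; lra).
        nra. }
  intros m. eapply Rle_trans; [apply H|]. pose proof Dm_pos. pose proof (rho_pow_pos (Nat.max n m)). nra.
Qed.

Definition trunc (dig : nat -> pt) (N : nat) : nat -> pt :=
  fun i => if Nat.ltb i N then dig i else pzero.

Lemma trunc_valid dig N : valid dig -> valid (trunc dig N).
Proof. intros H i; unfold trunc; destruct (Nat.ltb i N); auto. left; reflexivity. Qed.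

Lemma trunc_agree dig N : forall i, (i < N)%nat -> dig i = trunc dig N i.
Proof. intros i Hi; unfold trunc. apply Nat.ltb_lt in Hi; rewrite Hi; auto. Qed.

Lemma ps_trunc dig N m : (N <= m)%nat -> ps (trunc dig N) m = ps dig N.
Proof.
  induction m; intros Hm.
  - replace N with O by lia. reflexivity.
  - destruct (Nat.eq_dec N (S m)) as [->|Hne].
    + apply ps_agree. intros; symmetry; apply trunc_agree; auto.
    + rewrite ps_S, IHm by lia. unfold trunc.
      replace (Nat.ltb m N) with false by (symmetry; apply Nat.ltb_ge; lia).
      unfold ip; rewrite mpow_pzero. unfold padd, pzero; simpl. destruct (ps dig N); simpl; f_equal; ring.
Qed.

Lemma cauchy_coord (f : pt -> R) dig :
  (forall x y, Rabs (f x - f y) <= Nv (psub x y)) -> valid dig ->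
  Cauchy_crit (fun n => f (ps dig n)).
Proof.
  intros Hf Hv eps He.
  destruct (pow_lt_1_zero rho ltac:(unfold rho; rewrite Rabs_right; lra) (eps / (640 * Dm + 1)))
    as [N HN].
  { apply Rdiv_lt_0_compat; pose proof Dm_pos; lra. }
  exists N. intros n m Hn Hm. unfold R_dist.
  assert (Hb : forall k, (k >= N)%nat -> Rabs (f (ps dig k) - f (ps dig N)) <= 320 * Dm * rho ^ N).
  { intros k Hk. rewrite <- (ps_trunc dig N k) by lia.
    eapply Rle_trans; [apply Hf|]. apply diff_bound; auto. apply trunc_valid; auto. apply trunc_agree. }
  pose proof (Hb n Hn); pose proof (Hb m Hm).
  pose proof (HN N (le_n N)). rewrite Rabs_right in H1 by (apply Rle_ge, Rlt_le, rho_pow_pos).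
  pose proof Dm_pos. pose proof (rho_pow_pos N).
  assert (rho ^ N * (640 * Dm + 1) < eps).
  { apply (Rmult_lt_compat_r (640 * Dm + 1)) in H1; [|lra]. unfold Rdiv in H1.
    rewrite Rmult_assoc, Rinv_l in H1; lra. }
  replace (f (ps dig n) - f (ps dig m)) with ((f (ps dig n) - f (ps dig N)) - (f (ps dig m) - f (ps dig N))) by ring.
  eapply Rle_lt_trans; [apply Rabs_triang|]. rewrite Rabs_Ropp. nra.
Qed.

Lemma ps_conv dig : valid dig -> exists x, conv (ps dig) x.
Proof.
  intros Hv.
  destruct (R_complete _ (cauchy_coord fst dig (fun x y => ltac:(unfold Nv, psub; simpl; pose proof (Rabs_pos (snd x - snd y)); lra)) Hv)) as [l1 H1].
  destruct (R_complete _ (cauchy_coord snd dig (fun x y => ltac:(unfold Nv, psub; simpl; pose proof (Rabs_pos (fst x - fst y)); lra)) Hv)) as [l2 H2].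
  exists (l1, l2); split; auto.
Qed.

End BW.

End M_C.
Import M_C.

Module M_D.

Lemma minv_l M x : mdet M <> 0 -> mapply (minv M) (mapply M x) = x.
Proof. intros H. destruct x; unfold minv, mapply, mdet in *; simpl. f_equal; field; auto. Qed.
Lemma minv_r M x : mdet M <> 0 -> mapply M (mapply (minv M) x) = x.
Proof. intros H. destruct x; unfold minv, mapply, mdet in *; simpl. f_equal; field; auto. Qed.

Lemma partial_sum_ext M d d' n : (forall i, d i = d' i) -> partial_sum M d n = partial_sum M d' n.
Proof. intros H; induction n; simpl; [reflexivity|]. rewrite IHn, H; reflexivity. Qed.

Lemma lin_indep_det v w : lin_indep2 v w -> fst v * snd w - fst w * snd v <> 0.
Proof.
  intros Hl Hd. unfold lin_indep2, padd, pscale, pzero in Hl; simpl in Hl.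
  destruct (classic (snd w = 0 /\ snd v = 0)) as [[H1 H2]|Hn].
  - destruct (classic (fst w = 0 /\ fst v = 0)) as [[H3 H4]|Hn2].
    + destruct (Hl 1 0) as [Hc _]; [f_equal; lra| lra].
    + apply Hn2. destruct (Hl (fst w) (- fst v)) as [Ha Hb]; [f_equal; [ring|rewrite H1, H2; ring]| lra].
  - apply Hn. destruct (Hl (snd w) (- snd v)) as [Ha Hb]; [f_equal; nra| lra].
Qed.

Section Transfer.
Variables a b c d p q k : Z.
Variable v : pt.
Let A := matZ a b c d.
Let w := mapply A v.
Let P := IZR p.
Let Q := IZR q.
Let K := IZR k.
Hypothesis Hp : (- (a + d))%Z = p.
Hypothesis Hq : (a * d - b * c)%Z = q.
Hypothesis HPQ : adm P Q.
Hypothesis Hli : lin_indep2 v w.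

Let L := Mat2 (fst v) (fst w) (snd v) (snd w).
Let Li := minv L.

Lemma detL : mdet L <> 0.
Proof. unfold mdet, L; cbn [m11 m12 m21 m22]. apply lin_indep_det; auto. Qed.

Lemma detA : mdet A <> 0.
Proof.
  unfold mdet, A, matZ; simpl. rewrite <- !mult_IZR, <- minus_IZR, Hq.
  fold Q. pose proof (HQ P Q HPQ); auto.
Qed.

Lemma A_L z : mapply A (mapply L z) = mapply L (mapply (Bm P Q) z).
Proof.
  assert (EP : P = - (IZR a + IZR d)) by (unfold P; rewrite <- Hp, opp_IZR, plus_IZR; reflexivity).
  assert (EQ : Q = IZR a * IZR d - IZR b * IZR c) by (unfold Q; rewrite <- Hq, minus_IZR, !mult_IZR; reflexivity).
  unfold L, w, A, Bm, mapply, matZ; simpl. rewrite EP, EQ. destruct v, z; simpl; f_equal; ring.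
Qed.

Lemma Ainv_L z : mapply (minv A) (mapply L z) = mapply L (binv P Q z).
Proof.
  rewrite <- (Bm_binv P Q HPQ z) at 1. rewrite <- A_L. apply minv_l, detA.
Qed.

Lemma Apow_L n z : mpow_apply (minv A) n (mapply L z) = mapply L (ip P Q n z).
Proof.
  induction n; [reflexivity|]. rewrite mpow_S, IHn, Ainv_L. reflexivity.
Qed.

Lemma psA_L dig n : partial_sum A (fun i => mapply L (dig i)) n = mapply L (ps P Q dig n).
Proof.
  induction n.
  - simpl. symmetry; apply mapply_pzero.
  - change (partial_sum A (fun i => mapply L (dig i)) (S n)) with
      (padd (partial_sum A (fun i => mapply L (dig i)) n) (mpow_apply (minv A) (S n) (mapply L (dig n)))).
    rewrite IHn, Apow_L, ps_S, mapply_padd. reflexivity.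
Qed.

Lemma L_digits : mapply L pzero = pzero /\ mapply L (1, 0) = v /\ mapply L (0, K) = pscale K w.
Proof.
  unfold L, mapply, pzero, pscale; simpl; repeat split; destruct v; simpl; f_equal; ring.
Qed.

Definition DA := pzero :: v :: pscale K w :: nil.

Lemma T_transfer x :
  self_affine_set A DA x <-> self_affine_set (Bm P Q) (DB K) (mapply Li x).
Proof.
  destruct L_digits as [D0 [D1 D2]].
  assert (LLi : forall y, mapply L (mapply Li y) = y) by (intro; apply minv_r, detL).
  assert (LiL : forall y, mapply Li (mapply L y) = y) by (intro; apply minv_l, detL).
  split.
  - intros [dig [Hin Hcv]].
    exists (fun i => mapply Li (dig i)). split.
    + intros i. destruct (Hin i) as [E|[E|[E|[]]]]; rewrite <- E; unfold DB; simpl.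
      * left. rewrite mapply_pzero. reflexivity.
      * right; left. rewrite <- D1 at 1. rewrite LiL. reflexivity.
      * right; right; left. rewrite <- D2 at 1. rewrite LiL. reflexivity.
    + assert (E : forall n, partial_sum (Bm P Q) (fun i => mapply Li (dig i)) n = mapply Li (partial_sum A dig n)).
      { intros n. rewrite (partial_sum_ext A dig (fun i => mapply L (mapply Li (dig i)))) by auto.
        rewrite psA_L, LiL. reflexivity. }
      pose proof (conv_mapply Li _ _ Hcv) as Hc. destruct Hc as [H1 H2]. split.
      * eapply conv_ext with (u := fun n => mapply Li (partial_sum A dig n)); [intros; symmetry; apply E|]. split; auto.
      * eapply conv_ext with (u := fun n => mapply Li (partial_sum A dig n)); [intros; symmetry; apply E|]. split; auto.
  - intros [dig [Hin Hcv]].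
    exists (fun i => mapply L (dig i)). split.
    + intros i. destruct (Hin i) as [E|[E|[E|[]]]]; rewrite <- E; unfold DA; simpl; auto.
    + assert (Hc : conv (fun n => mapply L (ps P Q dig n)) (mapply L (mapply Li x))).
      { apply conv_mapply. exact Hcv. }
      rewrite LLi in Hc. destruct Hc as [H1 H2].
      split; eapply conv_ext with (u := fun n => mapply L (ps P Q dig n)); try (intros; symmetry; apply psA_L);
        split; auto.
Qed.

Lemma conn_transfer :
  connected2 (self_affine_set A DA) <-> connected2 (self_affine_set (Bm P Q) (DB K)).
Proof.
  apply (connected_transfer _ _ L Li).
  - intro; apply minv_r, detL.
  - intro; apply minv_l, detL.
  - apply T_transfer.
Qed.

End Transfer.

End M_D.
Import M_D.

Module M_G.

Lemma adm_of (a b c d p q : Z) :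
  expanding (matZ a b c d) -> (- (a + d))%Z = p -> (a * d - b * c)%Z = q ->
  (0 < p)%Z -> (q = 3 \/ q = -3)%Z -> adm (IZR p) (IZR q).
Proof.
  intros He Hp Hq Hp0 Hq3.
  assert (Etr : mtr (matZ a b c d) = - IZR p).
  { unfold mtr, matZ; simpl. rewrite <- Hp, opp_IZR, plus_IZR. ring. }
  assert (Edet : mdet (matZ a b c d) = IZR q).
  { unfold mdet, matZ; simpl. rewrite <- Hq, minus_IZR, !mult_IZR. ring. }
  assert (Hpos : 1 <= IZR p) by (apply IZR_le; lia).
  destruct Hq3 as [-> | ->].
  - left. split; [reflexivity|].
    destruct (Z_lt_le_dec p 4) as [Hl|Hl].
    + assert (p = 1 \/ p = 2 \/ p = 3)%Z as [-> | [-> | ->]] by lia; auto.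
    + exfalso. set (P := IZR p) in *. assert (HP4 : 4 <= P) by (apply IZR_le; lia).
      set (s := sqrt (P * P - 12)).
      assert (Hs2 : s * s = P * P - 12) by (apply sqrt_sqrt; nra).
      assert (Hs0 : 0 <= s) by apply sqrt_pos.
      specialize (He ((- P + s) / 2) 0).
      assert (Hge : P - 2 <= s) by nra.
      assert (Hle : s <= P) by nra.
      assert ((- P + s) / 2 * ((- P + s) / 2) + 0 * 0 > 1).
      { apply He. unfold is_eigenvalue. rewrite Etr, Edet. split; [|ring].
        replace (IZR 3) with 3 by reflexivity. field_simplify. nra. }
      nra.
  - right. split; [reflexivity|].
    destruct (Z_lt_le_dec p 2) as [Hl|Hl].
    + assert (p = 1)%Z as -> by lia; auto.
    + exfalso. set (P := IZR p) in *. assert (HP4 : 2 <= P) by (apply IZR_le; lia).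
      set (s := sqrt (P * P + 12)).
      assert (Hs2 : s * s = P * P + 12) by (apply sqrt_sqrt; nra).
      assert (Hs0 : 0 <= s) by apply sqrt_pos.
      specialize (He ((- P + s) / 2) 0).
      assert (Hge : P <= s) by nra.
      assert (Hle : s <= P + 2) by nra.
      assert ((- P + s) / 2 * ((- P + s) / 2) + 0 * 0 > 1).
      { apply He. unfold is_eigenvalue. rewrite Etr, Edet. split; [|ring].
        replace (IZR (-3)) with (-3) by reflexivity. field_simplify. nra. }
      nra.
Qed.

End M_G.
Import M_G.

Module M_E.

Lemma conv_padd u u' x y : conv u x -> conv u' y -> conv (fun n => padd (u n) (u' n)) (padd x y).
Proof. intros [H1 H2] [H3 H4]; split; simpl; apply CV_plus; auto. Qed.
Lemma conv_cst x : conv (fun _ => x) x.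
Proof. split; apply cv_const. Qed.
Lemma conv_mpow M m u x : conv u x -> conv (fun n => mpow_apply M m (u n)) (mpow_apply M m x).
Proof.
  induction m; intros H; [exact H|]. apply (conv_mapply M) in IHm; auto.
Qed.
Lemma conv_shift u x m : conv (fun j => u (m + j)%nat) x -> conv u x.
Proof. intros [H1 H2]; split; eapply cv_shift; eauto. Qed.

Ltac pteq := unfold padd, psub, pscale, pzero; cbn [fst snd]; f_equal; ring.

Section Conn.
Variables P Q K : R.
Hypothesis HPQ : adm P Q.

Notation ps := (ps P Q).
Notation ip := (ip P Q).
Notation valid := (valid K).
Notation DB := (DB K).
Notation Dm := (Dm K).

Definition Tset := self_affine_set (Bm P Q) DB.

Definition Cyl n (w : nat -> pt) x :=
  exists dig, valid dig /\ (forall i, (i < n)%nat -> dig i = w i) /\ conv (ps dig) x.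

Definition upd (w : nat -> pt) n dd : nat -> pt := fun i => if Nat.eqb i n then dd else w i.
Definition validpre n (w : nat -> pt) := forall i, (i < n)%nat -> In (w i) DB.

Lemma Cyl_T n w x : Cyl n w x -> Tset x.
Proof. intros [dig [Hv [_ Hc]]]. exists dig. split; auto. Qed.
Lemma T_Cyl0 w x : Tset x -> Cyl 0 w x.
Proof. intros [dig [Hv Hc]]. exists dig. repeat split; try apply Hc; auto. intros; lia. Qed.

Lemma Cyl_split n w x : Cyl n w x -> exists dd, In dd DB /\ Cyl (S n) (upd w n dd) x.
Proof.
  intros [dig [Hv [Ha Hc]]]. exists (dig n). split; auto. exists dig. split; auto. split; [|exact Hc].
  intros i Hi. unfold upd. destruct (Nat.eqb_spec i n); [subst; auto|]. apply Ha; lia.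
Qed.

Lemma Cyl_nonempty n w : validpre n w -> exists x, Cyl n w x.
Proof.
  intros Hw. set (dig := fun i => if Nat.ltb i n then w i else pzero).
  assert (Hv : valid dig).
  { intros i; unfold dig. destruct (Nat.ltb_spec i n); auto. left; reflexivity. }
  destruct (ps_conv P Q HPQ K dig Hv) as [x Hx]. exists x, dig. split; auto. split; [|exact Hx].
  intros i Hi; unfold dig. destruct (Nat.ltb_spec i n); auto; lia.
Qed.

Lemma cv_bounded_abs u l B : Un_cv u l -> (forall n, Rabs (u n) <= B) -> Rabs l <= B.
Proof.
  intros Hu Hb. apply Rabs_le. split.
  - apply (cv_ge u); auto. intros n; pose proof (Hb n); pose proof (Rle_abs (u n)); pose proof (Rle_abs (- u n)); rewrite Rabs_Ropp in *. lra.
  - apply (cv_le u); auto. intros n; pose proof (Hb n); pose proof (Rle_abs (u n)); pose proof (Rle_abs (- u n)); rewrite Rabs_Ropp in *. lra.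
Qed.

Lemma Cyl_diam n w x y : Cyl n w x -> Cyl n w y -> dist2 x y <= 640 * Dm * rho ^ n.
Proof.
  intros [dig [Hv [Ha Hc]]] [dig' [Hv' [Ha' Hc']]].
  assert (Hb := diff_bound P Q HPQ K dig dig' n Hv Hv' (fun i Hi => eq_trans (Ha i Hi) (eq_sym (Ha' i Hi)))).
  destruct Hc as [H1 H2]; destruct Hc' as [H3 H4].
  pose proof (CV_minus _ _ _ _ H1 H3) as E1. pose proof (CV_minus _ _ _ _ H2 H4) as E2.
  assert (B1 : Rabs (fst x - fst y) <= 320 * Dm * rho ^ n).
  { apply (cv_bounded_abs _ _ _ E1). intros m. eapply Rle_trans; [|apply (Hb m)].
    unfold Nv, psub; simpl. pose proof (Rabs_pos (snd (ps dig m) - snd (ps dig' m))). lra. }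
  assert (B2 : Rabs (snd x - snd y) <= 320 * Dm * rho ^ n).
  { apply (cv_bounded_abs _ _ _ E2). intros m. eapply Rle_trans; [|apply (Hb m)].
    unfold Nv, psub; simpl. pose proof (Rabs_pos (fst (ps dig m) - fst (ps dig' m))). lra. }
  eapply Rle_trans; [apply dist2_le|]. unfold Nv, psub; simpl. lra.
Qed.

Lemma ip_padd n x y : ip n (padd x y) = padd (ip n x) (ip n y).
Proof. apply mpow_padd. Qed.
Lemma ip_psub n x y : ip n (psub x y) = psub (ip n x) (ip n y).
Proof. apply mpow_psub. Qed.
Lemma ip_add m n x : ip m (ip n x) = ip (m + n) x.
Proof. unfold M_C.ip, mpow_apply. symmetry. apply Nat.iter_add. Qed.

Definition cat (w : nat -> pt) n dd (s : nat -> pt) : nat -> pt :=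
  fun i => if Nat.ltb i n then w i else if Nat.eqb i n then dd else s (i - S n)%nat.

Lemma ps_cat w n dd s j :
  ps (cat w n dd s) (S n + j) = padd (ps w n) (ip (S n) (padd dd (ps s j))).
Proof.
  induction j.
  - rewrite Nat.add_0_r, ps_S.
    rewrite (ps_agree P Q (cat w n dd s) w n).
    2:{ intros i Hi; unfold cat. destruct (Nat.ltb_spec i n); auto; lia. }
    unfold cat. rewrite (proj2 (Nat.ltb_ge n n)) by lia. rewrite Nat.eqb_refl.
    f_equal. f_equal. change (M_C.ps P Q s 0) with pzero. destruct dd as [d1 d2]. unfold padd, pzero; simpl; f_equal; ring.
  - replace (S n + S j)%nat with (S (S n + j)) by lia. rewrite ps_S, IHj.
    rewrite (ps_S P Q s j). unfold cat.
    rewrite (proj2 (Nat.ltb_ge (S n + j) n)) by lia.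
    replace (Nat.eqb (S n + j) n) with false by (symmetry; apply Nat.eqb_neq; lia).
    replace (S n + j - S n)%nat with j by lia.
    rewrite !ip_padd. rewrite (ip_add (S n) (S j)). replace (S n + S j)%nat with (S (S n + j)) by lia.
    pteq.
Qed.

Lemma conv_cat w n dd s t : conv (ps s) t ->
  conv (ps (cat w n dd s)) (padd (ps w n) (ip (S n) (padd dd t))).
Proof.
  intros Hc. apply (conv_shift _ _ (S n)).
  eapply conv_ext; [intros j; symmetry; apply ps_cat|].
  apply conv_padd; [apply conv_cst|]. apply conv_mpow. apply conv_padd; [apply conv_cst|auto].
Qed.

Lemma valid_cat w n dd s : validpre n w -> In dd DB -> valid s -> valid (cat w n dd s).
Proof.
  intros Hw Hd Hs i. unfold cat. destruct (Nat.ltb_spec i n); auto. destruct (Nat.eqb i n); auto.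
Qed.

Definition edge (d d' : pt) := exists s s', valid s /\ valid s' /\
  forall t t', conv (ps s) t -> conv (ps s') t' -> padd d t = padd d' t'.

Lemma adjacent n w d d' : validpre n w -> In d DB -> In d' DB -> edge d d' ->
  exists z, Cyl (S n) (upd w n d) z /\ Cyl (S n) (upd w n d') z.
Proof.
  intros Hw Hd Hd' [s [s' [Hs [Hs' He]]]].
  destruct (ps_conv P Q HPQ K s Hs) as [t Ht]. destruct (ps_conv P Q HPQ K s' Hs') as [t' Ht'].
  exists (padd (ps w n) (ip (S n) (padd d t))). split.
  - exists (cat w n d s). split; [apply valid_cat; auto|]. split; [|apply conv_cat; auto].
    intros i Hi. unfold cat, upd. destruct (Nat.ltb_spec i n); destruct (Nat.eqb_spec i n); auto; lia.
  - exists (cat w n d' s'). split; [apply valid_cat; auto|]. split; [|rewrite (He t t' Ht Ht'); apply conv_cat; auto].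
    intros i Hi. unfold cat, upd. destruct (Nat.ltb_spec i n); destruct (Nat.eqb_spec i n); auto; lia.
Qed.

Lemma path_lemma s s' (y : nat -> pt) Y :
  valid s -> valid s' -> (forall n, Nv (y n) <= Y) ->
  (forall n, y (S n) = psub (mapply (Bm P Q) (y n)) (psub (s n) (s' n))) ->
  forall t t', conv (ps s) t -> conv (ps s') t' -> psub t t' = y O.
Proof.
  intros Hs Hs' HY Hy t t' Ht Ht'.
  assert (E : forall m, psub (ps s m) (ps s' m) = psub (y O) (ip m (y m))).
  { induction m.
    - unfold M_C.ps; simpl. change (M_C.ip P Q 0 (y 0%nat)) with (y 0%nat). pteq.
    - rewrite !ps_S. rewrite Hy, ip_psub.
      change (M_C.ip P Q (S m) (mapply (Bm P Q) (y m))) with (mpow_apply (minv (Bm P Q)) (S m) (mapply (Bm P Q) (y m))).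
      rewrite mpow_S'. fold (binv P Q (mapply (Bm P Q) (y m))). rewrite binv_Bm by auto.
      fold (M_C.ip P Q m (y m)).
      assert (psub (ps s m) (ps s' m) = psub (y O) (ip m (y m))) by exact IHm.
      revert H. rewrite ip_psub. unfold padd, psub. cbn [fst snd]. intro H.
      injection H as H1 H2. f_equal; lra. }
  assert (Hz : forall f : pt -> R, (forall x, Rabs (f x) <= Nv x) -> Un_cv (fun m => f (ip m (y m))) 0).
  { intros f Hf e He.
    destruct (pow_lt_1_zero rho ltac:(unfold rho; rewrite Rabs_right; lra) (e / (16 * Rabs Y + 1))) as [N HN].
    { apply Rdiv_lt_0_compat; pose proof (Rabs_pos Y); lra. }
    exists N. intros m Hm. unfold R_dist. rewrite Rminus_0_r.
    pose proof (HN m Hm). rewrite Rabs_right in H by (apply Rle_ge, Rlt_le, rho_pow_pos).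
    pose proof (Hf (ip m (y m))). pose proof (Nv_ip P Q HPQ m (y m)).
    pose proof (HY m). pose proof (Rle_abs Y). pose proof (rho_pow_pos m). pose proof (Nv_nonneg (y m)).
    pose proof (Rabs_pos Y).
    assert (rho ^ m * (16 * Rabs Y + 1) < e).
    { apply (Rmult_lt_compat_r (16 * Rabs Y + 1)) in H; [|lra]. unfold Rdiv in H.
      rewrite Rmult_assoc, Rinv_l in H; lra. }
    nra. }
  destruct Ht as [H1 H2]; destruct Ht' as [H3 H4].
  pose proof (CV_minus _ _ _ _ H1 H3) as E1. pose proof (CV_minus _ _ _ _ H2 H4) as E2.
  assert (F1 : Un_cv (fun m => fst (ps s m) - fst (ps s' m)) (fst (y O))).
  { assert (Un_cv (fun m => fst (y O) - fst (ip m (y m))) (fst (y O) - 0)).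
    { apply CV_minus; [apply cv_const|]. apply Hz. intros x; unfold Nv; pose proof (Rabs_pos (snd x)); lra. }
    rewrite Rminus_0_r in H. intros e He. destruct (H e He) as [N HN]. exists N. intros m Hm.
    pose proof (E m) as Em. unfold psub in Em. injection Em as Em1 Em2. rewrite Em1. apply HN; auto. }
  assert (F2 : Un_cv (fun m => snd (ps s m) - snd (ps s' m)) (snd (y O))).
  { assert (Un_cv (fun m => snd (y O) - snd (ip m (y m))) (snd (y O) - 0)).
    { apply CV_minus; [apply cv_const|]. apply Hz. intros x; unfold Nv; pose proof (Rabs_pos (fst x)); lra. }
    rewrite Rminus_0_r in H. intros e He. destruct (H e He) as [N HN]. exists N. intros m Hm.
    pose proof (E m) as Em. unfold psub in Em. injection Em as Em1 Em2. rewrite Em2. apply HN; auto. }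
  pose proof (UL_sequence _ _ _ E1 F1). pose proof (UL_sequence _ _ _ E2 F2).
  unfold psub. destruct (y O); simpl in *. f_equal; auto.
Qed.

End Conn.

End M_E.
Import M_E.

Module M_F.

Section Main1.
Variables P Q K : R.
Hypothesis HPQ : adm P Q.
Notation ps := (ps P Q).
Notation valid := (valid K).
Notation DB := (DB K).
Notation Dm := (Dm K).
Notation Cyl := (Cyl P Q K).
Notation Tset := (Tset P Q K).
Notation validpre := (validpre K).
Notation edge := (edge P Q K).

Hypothesis E01 : edge pzero (1, 0).
Hypothesis E2 : edge pzero (0, K) \/ edge (1, 0) (0, K).

Theorem conn_main : connected2 Tset.
Proof.
  intros [U [V [HU [HV [Hcov [[a [Ha1 Ha2]] [[b [Hb1 Hb2]] Hdis]]]]]]].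
  set (mixed := fun n w => (exists x, Cyl n w x /\ U x) /\ (exists y, Cyl n w y /\ V y)).
  assert (step : forall n w, validpre n w -> mixed n w ->
             exists dd, In dd DB /\ mixed (S n) (upd w n dd)).
  { intros n w Hw Hm. apply NNPP. intros Hn.
    assert (Hc : forall dd, In dd DB -> ~ mixed (S n) (upd w n dd)) by (intros dd Hd Hm'; apply Hn; eauto).
    assert (Hvp : forall dd, In dd DB -> validpre (S n) (upd w n dd)).
    { intros dd Hd i Hi. unfold upd. destruct (Nat.eqb_spec i n); auto. apply Hw; lia. }
    assert (pure : forall dd, In dd DB ->
              (forall x, Cyl (S n) (upd w n dd) x -> U x) \/ (forall x, Cyl (S n) (upd w n dd) x -> V x)).
    { intros dd Hd. destruct (Cyl_nonempty P Q K HPQ _ _ (Hvp dd Hd)) as [x0 Hx0].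
      destruct (Hcov x0 (Cyl_T _ _ _ _ _ _ Hx0)) as [Ux0|Vx0].
      - left. intros x Hx. destruct (Hcov x (Cyl_T _ _ _ _ _ _ Hx)) as [|Vx]; auto.
        exfalso; apply (Hc dd Hd). split; eauto.
      - right. intros x Hx. destruct (Hcov x (Cyl_T _ _ _ _ _ _ Hx)) as [Ux|]; auto.
        exfalso; apply (Hc dd Hd). split; eauto. }
    assert (same : forall d d', In d DB -> In d' DB -> edge d d' ->
        ((forall x, Cyl (S n) (upd w n d) x -> U x) -> (forall x, Cyl (S n) (upd w n d') x -> V x) -> False) /\
        ((forall x, Cyl (S n) (upd w n d) x -> V x) -> (forall x, Cyl (S n) (upd w n d') x -> U x) -> False)).
    { intros d d' Hd Hd' He. destruct (adjacent P Q K HPQ n w d d' Hw Hd Hd' He) as [z [Hz1 Hz2]].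
      split; intros H1 H2; apply (Hdis z (Cyl_T _ _ _ _ _ _ Hz1)); auto. }
    assert (I0 : In pzero DB) by (left; reflexivity).
    assert (I1 : In (1, 0) DB) by (right; left; reflexivity).
    assert (I2 : In (0, K) DB) by (right; right; left; reflexivity).
    assert (all : (forall dd, In dd DB -> forall x, Cyl (S n) (upd w n dd) x -> U x) \/
                  (forall dd, In dd DB -> forall x, Cyl (S n) (upd w n dd) x -> V x)).
    { destruct (pure _ I0) as [P0|P0]; destruct (pure _ I1) as [P1|P1]; destruct (pure _ I2) as [P2|P2];
      try (exfalso; destruct (same _ _ I0 I1 E01); tauto);
      try (exfalso; destruct E2 as [E|E]; [destruct (same _ _ I0 I2 E)|destruct (same _ _ I1 I2 E)]; tauto);
      [left|right]; intros dd Hd; destruct Hd as [<-|[<-|[<-|[]]]]; auto. }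
    destruct Hm as [[x [Hx Ux]] [y [Hy Vy]]].
    destruct all as [AU|AV].
    - destruct (Cyl_split _ _ _ _ _ _ Hy) as [dd [Hd Hy']].
      apply (Hdis y (Cyl_T _ _ _ _ _ _ Hy)); auto. eapply AU; eauto.
    - destruct (Cyl_split _ _ _ _ _ _ Hx) as [dd [Hd Hx']].
      apply (Hdis x (Cyl_T _ _ _ _ _ _ Hx)); auto. eapply AV; eauto. }
  assert (choice : forall n w, exists dd, (validpre n w /\ mixed n w) -> (In dd DB /\ mixed (S n) (upd w n dd))).
  { intros n w. destruct (classic (validpre n w /\ mixed n w)) as [[H1 H2]|H].
    - destruct (step n w H1 H2) as [dd Hdd]. exists dd; auto.
    - exists pzero. intros; contradiction. }
  set (ch := fun n w => proj1_sig (constructive_indefinite_description _ (choice n w))).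
  assert (Hch : forall n w, validpre n w -> mixed n w -> In (ch n w) DB /\ mixed (S n) (upd w n (ch n w))).
  { intros n w H1 H2. unfold ch. destruct (constructive_indefinite_description _ (choice n w)); simpl; auto. }
  set (W := fix W (n : nat) : nat -> pt := match n with O => fun _ => pzero | S m => upd (W m) m (ch m (W m)) end).
  assert (Inv : forall n, validpre n (W n) /\ mixed n (W n)).
  { induction n.
    - split; [intros i Hi; lia|]. split; [exists a|exists b]; split; auto; apply T_Cyl0; auto.
    - destruct IHn as [H1 H2]. destruct (Hch n (W n) H1 H2) as [H3 H4]. split; [|exact H4].
      intros i Hi. simpl. unfold upd. destruct (Nat.eqb_spec i n); auto. apply H1; lia. }
  set (dig := fun i => W (S i) i).
  assert (Stab : forall m i, (i < m)%nat -> W m i = dig i).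
  { induction m; intros i Hi; [lia|]. unfold dig. simpl. unfold upd.
    destruct (Nat.eqb_spec i m) as [->|Hne].
    - simpl. unfold upd. rewrite Nat.eqb_refl. reflexivity.
    - rewrite IHm by lia. unfold dig. simpl. unfold upd. rewrite Nat.eqb_refl. reflexivity. }
  assert (Hv : valid dig).
  { intros i. unfold dig. destruct (Inv (S i)) as [H _]. apply H. lia. }
  destruct (ps_conv P Q HPQ K dig Hv) as [x Hx].
  assert (HC : forall n, Cyl n (W n) x).
  { intros n. exists dig. split; auto. split; [|exact Hx]. intros i Hi; symmetry; apply Stab; auto. }
  assert (Tx : Tset x) by (eapply Cyl_T; apply (HC O)).
  assert (small : forall e, 0 < e -> exists n, 640 * Dm * rho ^ n < e).
  { intros e He. destruct (pow_lt_1_zero rho ltac:(unfold rho; rewrite Rabs_right; lra) (e / (640 * Dm))) as [N HN].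
    { apply Rdiv_lt_0_compat; pose proof (Dm_pos K); lra. }
    exists N. pose proof (HN N (le_n N)). rewrite Rabs_right in H by (apply Rle_ge, Rlt_le, rho_pow_pos).
    pose proof (Dm_pos K).
    apply (Rmult_lt_compat_l (640 * Dm)) in H; [|lra].
    replace (640 * Dm * (e / (640 * Dm))) with e in H by (field; lra). lra. }
  destruct (Hcov x Tx) as [Ux|Vx].
  - destruct (HU x Ux) as [e [He HUe]]. destruct (small e He) as [n Hn].
    destruct (Inv n) as [_ [_ [y [Hy Vy]]]].
    apply (Hdis y (Cyl_T _ _ _ _ _ _ Hy)); auto. apply HUe.
    pose proof (Cyl_diam P Q K HPQ n (W n) x y (HC n) Hy). lra.
  - destruct (HV x Vx) as [e [He HVe]]. destruct (small e He) as [n Hn].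
    destruct (Inv n) as [_ [[y [Hy Uy]] _]].
    apply (Hdis y (Cyl_T _ _ _ _ _ _ Hy)); auto. apply HVe.
    pose proof (Cyl_diam P Q K HPQ n (W n) x y (HC n) Hy). lra.
Qed.

End Main1.

End M_F.
Import M_F.

Module M_H0.

Lemma edge_sm P Q K d d' (nxt : nat -> nat) sg sg' yv Y :
  adm P Q ->
  (forall s, In (sg s) (DB K)) -> (forall s, In (sg' s) (DB K)) -> (forall s, Nv (yv s) <= Y) ->
  (forall s, yv (nxt s) = psub (mapply (Bm P Q) (yv s)) (psub (sg s) (sg' s))) ->
  yv O = psub d' d -> edge P Q K d d'.
Proof.
  intros HPQ H1 H2 H3 H4 H5.
  set (st := fun n => Nat.iter n nxt O).
  exists (fun n => sg (st n)), (fun n => sg' (st n)). split; [intro; auto|]. split; [intro; auto|].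
  intros t t' Ht Ht'.
  pose proof (path_lemma P Q K HPQ _ _ (fun n => yv (st n)) Y (fun n => H1 _) (fun n => H2 _) (fun n => H3 _)
     (fun n => H4 (st n)) t t' Ht Ht') as E.
  simpl in E. rewrite H5 in E. unfold psub, padd in *. injection E as E1 E2. f_equal; lra.
Qed.

Ltac sm := cbn -[IZR Rabs Rplus Rmult Ropp Rminus Rdiv Rinv].
Ltac dbtac := unfold DB; sm; first [left; reflexivity | right; left; reflexivity | right; right; left; reflexivity].
Ltac nvtac := unfold Nv; sm; repeat ((rewrite Rabs_right by lra) || (rewrite Rabs_left by lra)); lra.
Ltac eqtac := unfold psub, mapply, Bm; sm; f_equal; lra.
Ltac admtac := unfold adm; first [left; split; [lra|]; first [left; lra | right; left; lra | right; right; lra] | right; split; lra].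

End M_H0.
Import M_H0.

Module M_H.

Lemma edge_1_3_1_01 : edge (1) (3) (1) pzero (1, 0).
Proof.
  apply (edge_sm (1) (3) (1) pzero (1, 0) (fun s => match s with | _ => 0%nat end) (fun s => match s with | _ => (0, (1)) end) (fun s => match s with | _ => (1, 0) end) (fun s => match s with | _ => ((1), (0)) end) 1).
  - admtac.
  - intros s; do 1 (destruct s as [|s]; [dbtac|]); dbtac.
  - intros s; do 1 (destruct s as [|s]; [dbtac|]); dbtac.
  - intros s; do 1 (destruct s as [|s]; [nvtac|]); nvtac.
  - intros s; do 1 (destruct s as [|s]; [eqtac|]); eqtac.
  - eqtac.
Qed.

Lemma edge_1_3_1_02 : edge (1) (3) (1) pzero (0, (1)).
Proof.
  apply (edge_sm (1) (3) (1) pzero (0, (1)) (fun s => match s with | 0 => 1%nat | 1 => 2%nat | _ => 0%nat end) (fun s => match s with | 0 => pzero | 1 => (1, 0) | _ => (0, (1)) end) (fun s => match s with | 0 => (1, 0) | 1 => (0, (1)) | _ => pzero end) (fun s => match s with | 0 => ((0), (1)) | 1 => ((-2), (-1)) | _ => ((2), (0)) end) 3).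
  - admtac.
  - intros s; do 3 (destruct s as [|s]; [dbtac|]); dbtac.
  - intros s; do 3 (destruct s as [|s]; [dbtac|]); dbtac.
  - intros s; do 3 (destruct s as [|s]; [nvtac|]); nvtac.
  - intros s; do 3 (destruct s as [|s]; [eqtac|]); eqtac.
  - eqtac.
Qed.

Lemma edge_1_3_m1_01 : edge (1) (3) (-1) pzero (1, 0).
Proof.
  apply (edge_sm (1) (3) (-1) pzero (1, 0) (fun s => match s with | 0 => 1%nat | _ => 1%nat end) (fun s => match s with | 0 => pzero | _ => pzero end) (fun s => match s with | 0 => (0, (-1)) | _ => pzero end) (fun s => match s with | 0 => ((1), (0)) | _ => ((0), (0)) end) 1).
  - admtac.
  - intros s; do 2 (destruct s as [|s]; [dbtac|]); dbtac.
  - intros s; do 2 (destruct s as [|s]; [dbtac|]); dbtac.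
  - intros s; do 2 (destruct s as [|s]; [nvtac|]); nvtac.
  - intros s; do 2 (destruct s as [|s]; [eqtac|]); eqtac.
  - eqtac.
Qed.

Lemma edge_1_3_m1_12 : edge (1) (3) (-1) (1, 0) (0, (-1)).
Proof.
  apply (edge_sm (1) (3) (-1) (1, 0) (0, (-1)) (fun s => match s with | 0 => 1%nat | 1 => 2%nat | 2 => 3%nat | 3 => 4%nat | _ => 1%nat end) (fun s => match s with | 0 => (1, 0) | 1 => pzero | 2 => (0, (-1)) | 3 => (0, (-1)) | _ => (1, 0) end) (fun s => match s with | 0 => pzero | 1 => (0, (-1)) | 2 => (1, 0) | 3 => pzero | _ => (0, (-1)) end) (fun s => match s with | 0 => ((-1), (-1)) | 1 => ((2), (0)) | 2 => ((0), (1)) | 3 => ((-2), (0)) | _ => ((0), (-1)) end) 2).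
  - admtac.
  - intros s; do 5 (destruct s as [|s]; [dbtac|]); dbtac.
  - intros s; do 5 (destruct s as [|s]; [dbtac|]); dbtac.
  - intros s; do 5 (destruct s as [|s]; [nvtac|]); nvtac.
  - intros s; do 5 (destruct s as [|s]; [eqtac|]); eqtac.
  - eqtac.
Qed.

Lemma edge_2_3_1_01 : edge (2) (3) (1) pzero (1, 0).
Proof.
  apply (edge_sm (2) (3) (1) pzero (1, 0) (fun s => match s with | _ => 0%nat end) (fun s => match s with | _ => (0, (1)) end) (fun s => match s with | _ => (1, 0) end) (fun s => match s with | _ => ((1), (0)) end) 1).
  - admtac.
  - intros s; do 1 (destruct s as [|s]; [dbtac|]); dbtac.
  - intros s; do 1 (destruct s as [|s]; [dbtac|]); dbtac.
  - intros s; do 1 (destruct s as [|s]; [nvtac|]); nvtac.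
  - intros s; do 1 (destruct s as [|s]; [eqtac|]); eqtac.
  - eqtac.
Qed.

Lemma edge_2_3_1_02 : edge (2) (3) (1) pzero (0, (1)).
Proof.
  apply (edge_sm (2) (3) (1) pzero (0, (1)) (fun s => match s with | 0 => 1%nat | 1 => 2%nat | _ => 0%nat end) (fun s => match s with | 0 => pzero | 1 => (1, 0) | _ => (0, (1)) end) (fun s => match s with | 0 => (0, (1)) | 1 => (0, (1)) | _ => pzero end) (fun s => match s with | 0 => ((0), (1)) | 1 => ((-3), (-1)) | _ => ((2), (0)) end) 4).
  - admtac.
  - intros s; do 3 (destruct s as [|s]; [dbtac|]); dbtac.
  - intros s; do 3 (destruct s as [|s]; [dbtac|]); dbtac.
  - intros s; do 3 (destruct s as [|s]; [nvtac|]); nvtac.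
  - intros s; do 3 (destruct s as [|s]; [eqtac|]); eqtac.
  - eqtac.
Qed.

Lemma edge_2_3_m1_01 : edge (2) (3) (-1) pzero (1, 0).
Proof.
  apply (edge_sm (2) (3) (-1) pzero (1, 0) (fun s => match s with | 0 => 1%nat | _ => 1%nat end) (fun s => match s with | 0 => pzero | _ => pzero end) (fun s => match s with | 0 => (0, (-1)) | _ => pzero end) (fun s => match s with | 0 => ((1), (0)) | _ => ((0), (0)) end) 1).
  - admtac.
  - intros s; do 2 (destruct s as [|s]; [dbtac|]); dbtac.
  - intros s; do 2 (destruct s as [|s]; [dbtac|]); dbtac.
  - intros s; do 2 (destruct s as [|s]; [nvtac|]); nvtac.
  - intros s; do 2 (destruct s as [|s]; [eqtac|]); eqtac.
  - eqtac.
Qed.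

Lemma edge_2_3_m1_12 : edge (2) (3) (-1) (1, 0) (0, (-1)).
Proof.
  apply (edge_sm (2) (3) (-1) (1, 0) (0, (-1)) (fun s => match s with | 0 => 1%nat | 1 => 2%nat | 2 => 3%nat | _ => 1%nat end) (fun s => match s with | 0 => (1, 0) | 1 => pzero | 2 => (0, (-1)) | _ => (1, 0) end) (fun s => match s with | 0 => pzero | 1 => (1, 0) | 2 => pzero | _ => (0, (-1)) end) (fun s => match s with | 0 => ((-1), (-1)) | 1 => ((2), (1)) | 2 => ((-2), (0)) | _ => ((0), (-1)) end) 3).
  - admtac.
  - intros s; do 4 (destruct s as [|s]; [dbtac|]); dbtac.
  - intros s; do 4 (destruct s as [|s]; [dbtac|]); dbtac.
  - intros s; do 4 (destruct s as [|s]; [nvtac|]); nvtac.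
  - intros s; do 4 (destruct s as [|s]; [eqtac|]); eqtac.
  - eqtac.
Qed.

Lemma edge_3_3_1_01 : edge (3) (3) (1) pzero (1, 0).
Proof.
  apply (edge_sm (3) (3) (1) pzero (1, 0) (fun s => match s with | _ => 0%nat end) (fun s => match s with | _ => (0, (1)) end) (fun s => match s with | _ => (1, 0) end) (fun s => match s with | _ => ((1), (0)) end) 1).
  - admtac.
  - intros s; do 1 (destruct s as [|s]; [dbtac|]); dbtac.
  - intros s; do 1 (destruct s as [|s]; [dbtac|]); dbtac.
  - intros s; do 1 (destruct s as [|s]; [nvtac|]); nvtac.
  - intros s; do 1 (destruct s as [|s]; [eqtac|]); eqtac.
  - eqtac.
Qed.

Lemma edge_3_3_1_02 : edge (3) (3) (1) pzero (0, (1)).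
Proof.
  apply (edge_sm (3) (3) (1) pzero (0, (1)) (fun s => match s with | 0 => 1%nat | 1 => 2%nat | 2 => 3%nat | _ => 2%nat end) (fun s => match s with | 0 => (1, 0) | 1 => (1, 0) | 2 => (0, (1)) | _ => (1, 0) end) (fun s => match s with | 0 => (0, (1)) | 1 => pzero | 2 => (1, 0) | _ => (0, (1)) end) (fun s => match s with | 0 => ((0), (1)) | 1 => ((-4), (-2)) | 2 => ((5), (2)) | _ => ((-5), (-2)) end) 7).
  - admtac.
  - intros s; do 4 (destruct s as [|s]; [dbtac|]); dbtac.
  - intros s; do 4 (destruct s as [|s]; [dbtac|]); dbtac.
  - intros s; do 4 (destruct s as [|s]; [nvtac|]); nvtac.
  - intros s; do 4 (destruct s as [|s]; [eqtac|]); eqtac.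
  - eqtac.
Qed.

Lemma edge_3_3_m1_01 : edge (3) (3) (-1) pzero (1, 0).
Proof.
  apply (edge_sm (3) (3) (-1) pzero (1, 0) (fun s => match s with | 0 => 1%nat | _ => 1%nat end) (fun s => match s with | 0 => pzero | _ => pzero end) (fun s => match s with | 0 => (0, (-1)) | _ => pzero end) (fun s => match s with | 0 => ((1), (0)) | _ => ((0), (0)) end) 1).
  - admtac.
  - intros s; do 2 (destruct s as [|s]; [dbtac|]); dbtac.
  - intros s; do 2 (destruct s as [|s]; [dbtac|]); dbtac.
  - intros s; do 2 (destruct s as [|s]; [nvtac|]); nvtac.
  - intros s; do 2 (destruct s as [|s]; [eqtac|]); eqtac.
  - eqtac.
Qed.

Lemma edge_3_3_m1_12 : edge (3) (3) (-1) (1, 0) (0, (-1)).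
Proof.
  apply (edge_sm (3) (3) (-1) (1, 0) (0, (-1)) (fun s => match s with | 0 => 1%nat | 1 => 2%nat | _ => 1%nat end) (fun s => match s with | 0 => pzero | 1 => pzero | _ => (0, (-1)) end) (fun s => match s with | 0 => (0, (-1)) | 1 => (0, (-1)) | _ => pzero end) (fun s => match s with | 0 => ((-1), (-1)) | 1 => ((3), (1)) | _ => ((-3), (-1)) end) 4).
  - admtac.
  - intros s; do 3 (destruct s as [|s]; [dbtac|]); dbtac.
  - intros s; do 3 (destruct s as [|s]; [dbtac|]); dbtac.
  - intros s; do 3 (destruct s as [|s]; [nvtac|]); nvtac.
  - intros s; do 3 (destruct s as [|s]; [eqtac|]); eqtac.
  - eqtac.
Qed.

Lemma edge_1_m3_1_01 : edge (1) (-3) (1) pzero (1, 0).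
Proof.
  apply (edge_sm (1) (-3) (1) pzero (1, 0) (fun s => match s with | _ => 0%nat end) (fun s => match s with | _ => (0, (1)) end) (fun s => match s with | _ => (1, 0) end) (fun s => match s with | _ => ((1), (0)) end) 1).
  - admtac.
  - intros s; do 1 (destruct s as [|s]; [dbtac|]); dbtac.
  - intros s; do 1 (destruct s as [|s]; [dbtac|]); dbtac.
  - intros s; do 1 (destruct s as [|s]; [nvtac|]); nvtac.
  - intros s; do 1 (destruct s as [|s]; [eqtac|]); eqtac.
  - eqtac.
Qed.

Lemma edge_1_m3_1_02 : edge (1) (-3) (1) pzero (0, (1)).
Proof.
  apply (edge_sm (1) (-3) (1) pzero (0, (1)) (fun s => match s with | 0 => 1%nat | _ => 0%nat end) (fun s => match s with | 0 => (1, 0) | _ => (0, (1)) end) (fun s => match s with | 0 => (0, (1)) | _ => pzero end) (fun s => match s with | 0 => ((0), (1)) | _ => ((2), (0)) end) 2).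
  - admtac.
  - intros s; do 2 (destruct s as [|s]; [dbtac|]); dbtac.
  - intros s; do 2 (destruct s as [|s]; [dbtac|]); dbtac.
  - intros s; do 2 (destruct s as [|s]; [nvtac|]); nvtac.
  - intros s; do 2 (destruct s as [|s]; [eqtac|]); eqtac.
  - eqtac.
Qed.

Lemma edge_1_m3_m1_01 : edge (1) (-3) (-1) pzero (1, 0).
Proof.
  apply (edge_sm (1) (-3) (-1) pzero (1, 0) (fun s => match s with | 0 => 1%nat | _ => 1%nat end) (fun s => match s with | 0 => pzero | _ => pzero end) (fun s => match s with | 0 => (0, (-1)) | _ => pzero end) (fun s => match s with | 0 => ((1), (0)) | _ => ((0), (0)) end) 1).
  - admtac.
  - intros s; do 2 (destruct s as [|s]; [dbtac|]); dbtac.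
  - intros s; do 2 (destruct s as [|s]; [dbtac|]); dbtac.
  - intros s; do 2 (destruct s as [|s]; [nvtac|]); nvtac.
  - intros s; do 2 (destruct s as [|s]; [eqtac|]); eqtac.
  - eqtac.
Qed.

Lemma edge_1_m3_m1_12 : edge (1) (-3) (-1) (1, 0) (0, (-1)).
Proof.
  apply (edge_sm (1) (-3) (-1) (1, 0) (0, (-1)) (fun s => match s with | 0 => 1%nat | _ => 1%nat end) (fun s => match s with | 0 => pzero | _ => (0, (-1)) end) (fun s => match s with | 0 => (0, (-1)) | _ => pzero end) (fun s => match s with | 0 => ((-1), (-1)) | _ => ((-3), (-1)) end) 4).
  - admtac.
  - intros s; do 2 (destruct s as [|s]; [dbtac|]); dbtac.
  - intros s; do 2 (destruct s as [|s]; [dbtac|]); dbtac.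
  - intros s; do 2 (destruct s as [|s]; [nvtac|]); nvtac.
  - intros s; do 2 (destruct s as [|s]; [eqtac|]); eqtac.
  - eqtac.
Qed.

End M_H.
Import M_H.

Module M_I.

Fixpoint sumr (f : nat -> R) (n : nat) : R :=
  match n with O => 0 | S m => sumr f m + f m end.

Lemma sumr_le f g n : (forall i, (i < n)%nat -> f i <= g i) -> sumr f n <= sumr g n.
Proof. induction n; simpl; intros H; [lra|]. pose proof (H n ltac:(lia)). pose proof (IHn (fun i Hi => H i ltac:(lia))). lra. Qed.
Lemma sumr_ext f g n : (forall i, (i < n)%nat -> f i = g i) -> sumr f n = sumr g n.
Proof. induction n; simpl; intros H; [lra|]. rewrite (H n ltac:(lia)), (IHn (fun i Hi => H i ltac:(lia))). lra. Qed.
Lemma sumr_nonneg f n : (forall i, 0 <= f i) -> 0 <= sumr f n.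
Proof. induction n; simpl; intros H; [lra|]. pose proof (H n). pose proof (IHn H). lra. Qed.
Lemma sumr_plus f g n : sumr (fun i => f i + g i) n = sumr f n + sumr g n.
Proof. induction n; simpl; [lra|]. rewrite IHn; lra. Qed.
Lemma sumr_scal c f n : sumr (fun i => c * f i) n = c * sumr f n.
Proof. induction n; simpl; [lra|]. rewrite IHn; lra. Qed.
Lemma sumr_shift1 f n : sumr f (S n) = f O + sumr (fun i => f (S i)) n.
Proof. induction n; simpl in *; [lra|]. rewrite IHn; lra. Qed.
Lemma sumr_split f J M : sumr f (J + M) = sumr f J + sumr (fun j => f (J + j)%nat) M.
Proof. induction M; simpl; [rewrite Nat.add_0_r; lra|]. rewrite Nat.add_succ_r; simpl. rewrite IHM; lra. Qed.
Lemma sumr_mono f n m : (forall i, 0 <= f i) -> (n <= m)%nat -> sumr f n <= sumr f m.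
Proof.
  intros H Hm. replace m with (n + (m - n))%nat by lia. rewrite sumr_split.
  pose proof (sumr_nonneg (fun j => f (n + j)%nat) (m - n) (fun j => H _)). lra.
Qed.

Lemma sum_upper (x hi : nat -> R) J C :
  (forall i, x i <= hi i) -> (forall i, 0 <= hi i) ->
  (forall M, sumr (fun j => hi (J + j)%nat) M <= C) ->
  forall N, sumr x N <= sumr hi J + C.
Proof.
  intros H1 H2 H3 N. apply Rle_trans with (sumr hi N); [apply sumr_le; intros; apply H1|].
  destruct (le_lt_dec N J).
  - pose proof (sumr_mono hi N J H2 l) as HA. assert (HC : 0 <= C) by (specialize (H3 O); simpl in H3; lra). lra.
  - replace N with (J + (N - J))%nat by lia. rewrite sumr_split. pose proof (H3 (N - J)%nat). lra.
Qed.

Lemma sum_lower (x lo : nat -> R) J C :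
  (forall i, lo i <= x i) -> (forall i, lo i <= 0) ->
  (forall M, - C <= sumr (fun j => lo (J + j)%nat) M) ->
  forall N, sumr lo J - C <= sumr x N.
Proof.
  intros H1 H2 H3 N.
  assert (H3' : forall M, sumr (fun j => - lo (J + j)%nat) M <= C).
  { intros M. specialize (H3 M).
    replace (sumr (fun j => - lo (J + j)%nat) M) with (-1 * sumr (fun j => lo (J + j)%nat) M)
      by (rewrite <- sumr_scal; apply sumr_ext; intros; ring). lra. }
  pose proof (sum_upper (fun i => - x i) (fun i => - lo i) J C (fun i => ltac:(specialize (H1 i); lra))
     (fun i => ltac:(specialize (H2 i); lra)) H3' N) as H.
  replace (sumr (fun i => - x i) N) with (-1 * sumr x N) in H by (rewrite <- sumr_scal; apply sumr_ext; intros; ring).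
  replace (sumr (fun i => - lo i) J) with (-1 * sumr lo J) in H by (rewrite <- sumr_scal; apply sumr_ext; intros; ring).
  lra.
Qed.

Lemma geom_sum M : sumr (fun j => rho ^ j) M = 10 * (1 - rho ^ M).
Proof. induction M; simpl; [lra|]. rewrite IHM. unfold rho; lra. Qed.

Lemma tail_bound P Q u c : adm P Q -> recs P Q u ->
  forall M, sumr (fun j => Rabs (u (c + j)%nat)) M <= 40 * (Rabs (u c) + Rabs (u (S c))).
Proof.
  intros HPQ Hr M.
  assert (Hr' : recs P Q (fun j => u (c + j)%nat)).
  { intro n. replace (c + S (S n))%nat with (S (S (c + n))) by lia. rewrite Hr. replace (c + S n)%nat with (S (c + n)) by lia. reflexivity. }
  pose proof (decay P Q _ HPQ Hr') as D. simpl in D. rewrite Nat.add_0_r, Nat.add_1_r in D.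
  eapply Rle_trans; [apply (sumr_le _ (fun j => 4 * (Rabs (u c) + Rabs (u (S c))) * rho ^ j)); intros; apply D|].
  rewrite sumr_scal, geom_sum. pose proof (rho_pow_pos M).
  pose proof (Rabs_pos (u c)); pose proof (Rabs_pos (u (S c))). nra.
Qed.

Section Disc.
Variables P Q K g1 g2 : R.
Hypothesis HPQ : adm P Q.
Notation ps := (ps P Q).
Notation ip := (ip P Q).
Notation valid := (valid K).

Definition phi (z : pt) := g1 * fst z + g2 * snd z.
Definition sq m := phi (ip m (0, 1)).

Lemma sq0 : sq 0 = g2.
Proof. unfold sq, phi; simpl. ring. Qed.
Lemma binv01 : binv P Q (0, 1) = (1, 0).
Proof. rewrite binv_eq by auto. simpl. pose proof (HQ P Q HPQ). f_equal; field; auto. Qed.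
Lemma sq1 : sq 1 = g1.
Proof. unfold sq. change (M_C.ip P Q 1 (0,1)) with (binv P Q (0, 1)). rewrite binv01. unfold phi; simpl; ring. Qed.

Lemma sq_rec : recs P Q sq.
Proof.
  intro n. unfold sq, phi. rewrite (rec_fst P Q HPQ (0,1) n), (rec_snd P Q HPQ (0,1) n).
  pose proof (HQ P Q HPQ). field; auto.
Qed.

Lemma phi_ip10 m : phi (ip m (1, 0)) = sq (S m).
Proof. unfold sq. unfold M_C.ip. rewrite mpow_S'. fold (binv P Q (0,1)). rewrite binv01. reflexivity. Qed.
Lemma phi_ip0K m : phi (ip m (0, K)) = K * sq m.
Proof.
  unfold sq. replace (0, K) with (pscale K (0, 1)) by (unfold pscale; simpl; f_equal; ring).
  unfold M_C.ip. rewrite mpow_pscale. unfold phi, pscale; simpl. ring.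
Qed.
Lemma phi_ip0 m : phi (ip m pzero) = 0.
Proof. unfold M_C.ip. rewrite mpow_pzero. unfold phi, pzero; simpl; ring. Qed.

Definition tm (dig : nat -> pt) i := phi (ip (S i) (dig i)).

Lemma phi_ps dig N : phi (ps dig N) = sumr (tm dig) N.
Proof.
  induction N; [unfold phi, M_C.ps; simpl; ring|].
  rewrite ps_S. simpl. rewrite <- IHN. unfold tm, phi, padd; simpl. ring.
Qed.

Lemma tm_cases dig i : In (dig i) (DB K) ->
  tm dig i = 0 \/ tm dig i = sq (S (S i)) \/ tm dig i = K * sq (S i).
Proof.
  unfold tm. intros [E|[E|[E|[]]]]; rewrite <- E.
  - left; apply phi_ip0.
  - right; left; apply phi_ip10.
  - right; right; apply phi_ip0K.
Qed.

Definition mx i := Rmax 0 (Rmax (sq (i + 3)) (K * sq (i + 2))).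
Definition mn i := Rmin 0 (Rmin (sq (i + 3)) (K * sq (i + 2))).
Definition tau := 40 * (Rabs (sq 31) + Rabs (sq 32)).
Definition Hi := sumr mx 29 + (1 + Rabs K) * tau.
Definition Lo := sumr mn 29 - (1 + Rabs K) * tau.

Lemma tail_sq c M : sumr (fun j => Rabs (sq (c + j)%nat)) M <= 40 * (Rabs (sq c) + Rabs (sq (S c))).
Proof. apply tail_bound with P Q; auto. apply sq_rec. Qed.

Lemma tail_sq2 M : sumr (fun j => Rabs (sq (32 + j)%nat)) M <= tau.
Proof.
  unfold tau. eapply Rle_trans; [|apply (tail_sq 31 (S M))].
  rewrite sumr_shift1. pose proof (Rabs_pos (sq (31 + 0))).
  replace (sumr (fun i => Rabs (sq (31 + S i)%nat)) M) with (sumr (fun j => Rabs (sq (32 + j)%nat)) M)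
    by (apply sumr_ext; intros; do 2 f_equal; lia). lra.
Qed.

Lemma mx_tail M : sumr (fun j => mx (29 + j)%nat) M <= (1 + Rabs K) * tau.
Proof.
  eapply Rle_trans with (sumr (fun j => Rabs (sq (32 + j)%nat) + Rabs K * Rabs (sq (31 + j)%nat)) M).
  - apply sumr_le. intros i _. unfold mx.
    replace (29 + i + 3)%nat with (32 + i)%nat by lia. replace (29 + i + 2)%nat with (31 + i)%nat by lia.
    pose proof (Rabs_pos (sq (32 + i))); pose proof (Rabs_pos K); pose proof (Rabs_pos (sq (31 + i))).
    apply Rmax_lub; [nra|]. apply Rmax_lub.
    + pose proof (Rle_abs (sq (32 + i))). nra.
    + rewrite <- Rabs_mult. pose proof (Rle_abs (K * sq (31 + i))). nra.
  - rewrite sumr_plus, sumr_scal. pose proof (tail_sq2 M). pose proof (tail_sq 31 M).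
    fold tau in H0. pose proof (Rabs_pos K). unfold tau in *. nra.
Qed.

Lemma mn_tail M : - ((1 + Rabs K) * tau) <= sumr (fun j => mn (29 + j)%nat) M.
Proof.
  eapply Rle_trans with (- sumr (fun j => Rabs (sq (32 + j)%nat) + Rabs K * Rabs (sq (31 + j)%nat)) M).
  - rewrite sumr_plus, sumr_scal. pose proof (tail_sq2 M). pose proof (tail_sq 31 M).
    pose proof (Rabs_pos K). unfold tau in *. nra.
  - replace (- sumr (fun j => Rabs (sq (32 + j)%nat) + Rabs K * Rabs (sq (31 + j)%nat)) M)
      with (sumr (fun j => -1 * (Rabs (sq (32 + j)%nat) + Rabs K * Rabs (sq (31 + j)%nat))) M)
      by (rewrite sumr_scal; ring).
    apply sumr_le. intros i _. unfold mn.
    replace (29 + i + 3)%nat with (32 + i)%nat by lia. replace (29 + i + 2)%nat with (31 + i)%nat by lia.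
    pose proof (Rabs_pos (sq (32 + i))); pose proof (Rabs_pos K); pose proof (Rabs_pos (sq (31 + i))).
    apply Rmin_glb; [nra|]. apply Rmin_glb.
    + pose proof (Rle_abs (- sq (32 + i))). rewrite Rabs_Ropp in H2. nra.
    + pose proof (Rle_abs (- (K * sq (31 + i)))). rewrite Rabs_Ropp, Rabs_mult in H2. nra.
Qed.

Lemma min3 a b : Rmin 0 (Rmin a b) <= 0 /\ Rmin 0 (Rmin a b) <= a /\ Rmin 0 (Rmin a b) <= b.
Proof. pose proof (Rmin_l 0 (Rmin a b)); pose proof (Rmin_r 0 (Rmin a b)); pose proof (Rmin_l a b); pose proof (Rmin_r a b). lra. Qed.
Lemma max3 a b : 0 <= Rmax 0 (Rmax a b) /\ a <= Rmax 0 (Rmax a b) /\ b <= Rmax 0 (Rmax a b).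
Proof. pose proof (Rmax_l 0 (Rmax a b)); pose proof (Rmax_r 0 (Rmax a b)); pose proof (Rmax_l a b); pose proof (Rmax_r a b). lra. Qed.

Lemma tm_bounds dig : valid dig -> forall N,
  Lo <= sumr (fun i => tm dig (S i)) N <= Hi.
Proof.
  intros Hv N. split.
  - unfold Lo. apply (sum_lower _ mn 29).
    + intros i. unfold mn. replace (i + 3)%nat with (S (S (S i))) by lia; replace (i + 2)%nat with (S (S i)) by lia.
      pose proof (min3 (sq (S (S (S i)))) (K * sq (S (S i)))).
      destruct (tm_cases dig (S i) (Hv _)) as [E|[E|E]]; rewrite E; lra.
    + intros i; apply Rmin_l.
    + intros M. apply mn_tail.
  - unfold Hi. apply (sum_upper _ mx 29).
    + intros i. unfold mx. replace (i + 3)%nat with (S (S (S i))) by lia; replace (i + 2)%nat with (S (S i)) by lia.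
      pose proof (max3 (sq (S (S (S i)))) (K * sq (S (S i)))).
      destruct (tm_cases dig (S i) (Hv _)) as [E|[E|E]]; rewrite E; lra.
    + intros i; apply Rmax_l.
    + intros M. apply mx_tail.
Qed.

End Disc.

End M_I.
Import M_I.

Module M_J.

Section DiscMain.
Variables P Q K g1 g2 : R.
Hypothesis HPQ : adm P Q.
Notation ps := (ps P Q).
Notation valid := (valid K).
Notation phi := (phi g1 g2).
Notation sq := (sq P Q g1 g2).
Notation Lo := (Lo P Q K g1 g2).
Notation Hi := (Hi P Q K g1 g2).
Notation tm := (tm P Q g1 g2).

Lemma phi_lip x y : Rabs (phi x - phi y) <= (Rabs g1 + Rabs g2) * dist2 x y.
Proof.
  unfold M_I.phi. replace (g1 * fst x + g2 * snd x - (g1 * fst y + g2 * snd y))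
    with (g1 * (fst x - fst y) + g2 * (snd x - snd y)) by ring.
  eapply Rle_trans; [apply abs_lin|].
  pose proof (fst_le_dist2 x y); pose proof (snd_le_dist2 x y).
  pose proof (Rabs_pos g1); pose proof (Rabs_pos g2). nra.
Qed.

Lemma open_side c (sgn : bool) : open2 (fun x => if sgn then phi x < c else c < phi x).
Proof.
  intros x Hx. set (G := Rabs g1 + Rabs g2 + 1).
  assert (HG : 1 <= G) by (unfold G; pose proof (Rabs_pos g1); pose proof (Rabs_pos g2); lra).
  exists ((if sgn then c - phi x else phi x - c) / G). split.
  - destruct sgn; apply Rdiv_lt_0_compat; lra.
  - intros y Hy. pose proof (phi_lip x y). pose proof (sqrt_pos ((fst x - fst y) ^ 2 + (snd x - snd y) ^ 2)).
    fold (dist2 x y) in H0.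
    assert (Hy' : dist2 x y * G < (if sgn then c - phi x else phi x - c)).
    { apply (Rmult_lt_compat_r G) in Hy; [|lra].
      replace ((if sgn then c - phi x else phi x - c) / G * G) with (if sgn then c - phi x else phi x - c) in Hy
        by (field; lra). lra. }
    pose proof (Rle_abs (phi x - phi y)). pose proof (Rle_abs (- (phi x - phi y))). rewrite Rabs_Ropp in H2.
    pose proof (Rabs_pos g1); pose proof (Rabs_pos g2).
    assert ((Rabs g1 + Rabs g2) * dist2 x y <= dist2 x y * G) by (unfold G; nra).
    destruct sgn; lra.
Qed.

Lemma conv_phi u x : conv u x -> Un_cv (fun n => phi (u n)) (phi x).
Proof. intros [H1 H2]. unfold M_I.phi. apply CV_plus; apply CV_mult; auto; apply cv_const. Qed.

Lemma phi_bounds dig x : valid dig -> conv (ps dig) x ->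
  tm dig 0 + Lo <= phi x <= tm dig 0 + Hi.
Proof.
  intros Hv Hc. pose proof (conv_phi _ _ Hc) as Hp.
  assert (E : forall N, (1 <= N)%nat -> phi (ps dig N) = tm dig 0 + sumr (fun i => tm dig (S i)) (N - 1)).
  { intros N HN. rewrite phi_ps. replace N with (S (N - 1)) at 1 by lia. apply sumr_shift1. }
  split.
  - apply (cv_ge_ev _ _ _ 1 Hp). intros n Hn. rewrite E by auto.
    destruct (tm_bounds P Q K g1 g2 HPQ dig Hv (n - 1)). lra.
  - apply (cv_le_ev _ _ _ 1 Hp). intros n Hn. rewrite E by auto.
    destruct (tm_bounds P Q K g1 g2 HPQ dig Hv (n - 1)). lra.
Qed.

Lemma not_conn_phi c :
  (forall x, Tset P Q K x -> phi x <> c) ->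
  (exists x, Tset P Q K x /\ phi x < c) -> (exists x, Tset P Q K x /\ c < phi x) ->
  ~ connected2 (Tset P Q K).
Proof.
  intros H1 [a [Ha1 Ha2]] [b [Hb1 Hb2]] HC. apply HC.
  exists (fun x => phi x < c), (fun x => c < phi x).
  split; [apply (open_side c true)|]. split; [apply (open_side c false)|].
  split; [intros x Hx; pose proof (H1 x Hx); lra|].
  split; [exists a; auto|]. split; [exists b; auto|].
  intros x _ H2 H3; lra.
Qed.

Lemma tm0_cases dig : valid dig -> tm dig 0 = 0 \/ tm dig 0 = sq 2 \/ (dig 0%nat = (0, K) /\ tm dig 0 = K * g1).
Proof.
  intros Hv. unfold M_I.tm. destruct (Hv 0%nat) as [E|[E|[E|[]]]]; rewrite <- E.
  - left; apply phi_ip0.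
  - right; left; apply phi_ip10; auto.
  - right; right; split; [reflexivity|]. rewrite phi_ip0K. rewrite sq1 by auto. reflexivity.
Qed.

Definition dig0 : nat -> pt := fun _ => pzero.
Definition dig1 : nat -> pt := fun i => match i with O => (0, K) | _ => pzero end.

Lemma dig0_valid : valid dig0.
Proof. intro; left; reflexivity. Qed.
Lemma dig1_valid : valid dig1.
Proof. intros [|i]; [right; right; left; reflexivity|left; reflexivity]. Qed.
Lemma tm_dig0 : tm dig0 0 = 0.
Proof. apply phi_ip0. Qed.
Lemma tm_dig1 : tm dig1 0 = K * g1.
Proof.
  unfold M_I.tm, dig1. rewrite phi_ip0K. rewrite sq1 by auto. reflexivity.
Qed.

Theorem disc_main :
  (K * g1 + Lo > Rmax 0 (sq 2) + Hi) \/ (K * g1 + Hi < Rmin 0 (sq 2) + Lo) ->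
  ~ connected2 (Tset P Q K).
Proof.
  pose proof (Rmax_l 0 (sq 2)); pose proof (Rmax_r 0 (sq 2)); pose proof (Rmin_l 0 (sq 2)); pose proof (Rmin_r 0 (sq 2)).
  destruct (ps_conv P Q HPQ K dig0 dig0_valid) as [x0 Hx0].
  destruct (ps_conv P Q HPQ K dig1 dig1_valid) as [x1 Hx1].
  pose proof (phi_bounds dig0 x0 dig0_valid Hx0) as B0. rewrite tm_dig0 in B0.
  pose proof (phi_bounds dig1 x1 dig1_valid Hx1) as B1. rewrite tm_dig1 in B1.
  assert (T0 : Tset P Q K x0) by (exists dig0; split; [apply dig0_valid|exact Hx0]).
  assert (T1 : Tset P Q K x1) by (exists dig1; split; [apply dig1_valid|exact Hx1]).
  intros [Hg|Hg].
  - apply (not_conn_phi ((K * g1 + Lo + Rmax 0 (sq 2) + Hi) / 2)).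
    + intros x [dig [Hv Hc]]. pose proof (phi_bounds dig x Hv Hc) as B.
      destruct (tm0_cases dig Hv) as [E|[E|[_ E]]]; rewrite E in B; lra.
    + exists x0; split; auto; lra.
    + exists x1; split; auto; lra.
  - apply (not_conn_phi ((K * g1 + Hi + Rmin 0 (sq 2) + Lo) / 2)).
    + intros x [dig [Hv Hc]]. pose proof (phi_bounds dig x Hv Hc) as B.
      destruct (tm0_cases dig Hv) as [E|[E|[_ E]]]; rewrite E in B; lra.
    + exists x1; split; auto; lra.
    + exists x0; split; auto; lra.
Qed.

End DiscMain.

End M_J.
Import M_J.

Module M_K.

Fixpoint zsum (f : nat -> Z) (n : nat) : Z :=
  match n with O => 0%Z | S m => (zsum f m + f m)%Z end.

Lemma sumr_IZR (f : nat -> Z) D n : D <> 0 -> sumr (fun i => IZR (f i) / D) n = IZR (zsum f n) / D.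
Proof. intros HD. induction n; simpl; [field; auto|]. rewrite IHn, plus_IZR. field; auto. Qed.

Lemma Rmax_IZR a b D : 0 < D -> Rmax (IZR a / D) (IZR b / D) = IZR (Z.max a b) / D.
Proof.
  intros HD. destruct (Z.max_spec a b) as [[H1 H2]|[H1 H2]]; rewrite H2.
  - apply Rmax_right. apply IZR_lt in H1. apply Rmult_le_compat_r; [apply Rlt_le, Rinv_0_lt_compat; auto|lra].
  - apply Rmax_left. apply IZR_le in H1. apply Rmult_le_compat_r; [apply Rlt_le, Rinv_0_lt_compat; auto|lra].
Qed.
Lemma Rmin_IZR a b D : 0 < D -> Rmin (IZR a / D) (IZR b / D) = IZR (Z.min a b) / D.
Proof.
  intros HD. destruct (Z.min_spec a b) as [[H1 H2]|[H1 H2]]; rewrite H2.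
  - apply Rmin_left. apply IZR_lt in H1. apply Rmult_le_compat_r; [apply Rlt_le, Rinv_0_lt_compat; auto|lra].
  - apply Rmin_right. apply IZR_le in H1. apply Rmult_le_compat_r; [apply Rlt_le, Rinv_0_lt_compat; auto|lra].
Qed.

Section Num.
Variables pz qz g1z g2z : Z.

Fixpoint Npair (m : nat) : Z * Z :=
  match m with
  | O => (g2z, 3 * g1z)%Z
  | S m' => let (a, b) := Npair m' in (b, - qz * (pz * b + 3 * a))%Z
  end.
Definition Nz m := fst (Npair m).

Lemma Nz_S m : snd (Npair m) = Nz (S m).
Proof. unfold Nz; simpl. destruct (Npair m); reflexivity. Qed.
Lemma Nz_rec m : Nz (S (S m)) = (- qz * (pz * Nz (S m) + 3 * Nz m))%Z.
Proof.
  unfold Nz. simpl. destruct (Npair m) as [a b] eqn:E. simpl. reflexivity.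
Qed.

Definition pw (e : nat) : Z := (3 ^ Z.of_nat e)%Z.
Definition sD m := (Nz m * pw (32 - m))%Z.

Definition X2z kz := zsum (fun i => Z.max 0 (Z.max (sD (i + 3)) (kz * sD (i + 2)))) 29.
Definition Y2z kz := zsum (fun i => Z.min 0 (Z.min (sD (i + 3)) (kz * sD (i + 2)))) 29.
Definition Ppz := zsum (fun i => Z.max 0 (sD (i + 2))) 29.
Definition Nnz := zsum (fun i => Z.max 0 (- sD (i + 2))) 29.
Definition tauz := (40 * (Z.abs (sD 31) + Z.abs (sD 32)))%Z.
Definition g1D := (g1z * pw 32)%Z.
Definition cpz := (2 * g1D + Y2z 2 - X2z 2 - Z.max 0 (sD 2) - 6 * tauz)%Z.
Definition cmz := (2 * g1D + Y2z (-2) - X2z (-2) + Z.min 0 (sD 2) - 6 * tauz)%Z.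
Definition slz := (g1D - Ppz - Nnz - 2 * tauz)%Z.
Definition check := (Z.ltb 0 cpz && Z.ltb 0 cmz && Z.leb 0 slz)%bool.

Variables P Q g1 g2 : R.
Hypothesis HPQ : adm P Q.
Hypothesis EP : P = IZR pz.
Hypothesis EQ : Q = IZR (3 * qz).
Hypothesis Eqz : qz = 1%Z \/ qz = (-1)%Z.
Hypothesis E1 : g1 = IZR g1z.
Hypothesis E2 : g2 = IZR g2z.

Notation sq := (sq P Q g1 g2).

Lemma sq_Nz m : sq m = IZR (Nz m) / 3 ^ m.
Proof.
  assert (H : forall m, sq m = IZR (Nz m) / 3 ^ m /\ sq (S m) = IZR (Nz (S m)) / 3 ^ (S m)).
  { induction m0.
    - split.
      + rewrite sq0. unfold Nz; cbn [Npair fst]. rewrite E2. change (3 ^ 0) with 1. field.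
      + rewrite sq1 by auto. unfold Nz; cbn [Npair fst snd]. rewrite E1, mult_IZR. change (3 ^ 1) with (3 * 1). field.
    - destruct IHm0 as [H1 H2]. split; auto.
      rewrite (sq_rec P Q g1 g2 HPQ), H1, H2, Nz_rec, EP, EQ.
      pose proof (pow_lt 3 m0 ltac:(lra)).
      destruct Eqz as [-> | ->]; rewrite ?mult_IZR, ?opp_IZR, ?plus_IZR, ?mult_IZR; simpl; field; lra. }
  apply H.
Qed.

Definition D : R := 3 ^ 32.
Lemma D_pos : 0 < D.
Proof. unfold D; apply pow_lt; lra. Qed.

Lemma sq_D m : (m <= 32)%nat -> sq m = IZR (sD m) / D.
Proof.
  intros Hm. rewrite sq_Nz. unfold sD, pw, D. rewrite mult_IZR, <- pow_IZR.
  replace 32%nat with (m + (32 - m))%nat at 2 by lia. rewrite pow_add.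
  pose proof (pow_lt 3 m ltac:(lra)). pose proof (pow_lt 3 (32 - m) ltac:(lra)).
  simpl (IZR 3). field. lra.
Qed.

Lemma scal_IZR (kz a : Z) : IZR kz * (IZR a / D) = IZR (kz * a) / D.
Proof. rewrite mult_IZR. unfold Rdiv. ring. Qed.
Lemma zero_IZR : 0 = IZR 0 / D.
Proof. unfold Rdiv; rewrite Rmult_0_l; reflexivity. Qed.

Lemma X2_eq kz : sumr (fun i => Rmax 0 (Rmax (sq (i + 3)) (IZR kz * sq (i + 2)))) 29 = IZR (X2z kz) / D.
Proof.
  pose proof D_pos. unfold X2z. rewrite <- sumr_IZR by lra. apply sumr_ext. intros i Hi.
  rewrite !sq_D by lia. rewrite scal_IZR, Rmax_IZR by auto. rewrite zero_IZR at 1. rewrite Rmax_IZR; auto.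
Qed.
Lemma Y2_eq kz : sumr (fun i => Rmin 0 (Rmin (sq (i + 3)) (IZR kz * sq (i + 2)))) 29 = IZR (Y2z kz) / D.
Proof.
  pose proof D_pos. unfold Y2z. rewrite <- sumr_IZR by lra. apply sumr_ext. intros i Hi.
  rewrite !sq_D by lia. rewrite scal_IZR, Rmin_IZR by auto. rewrite zero_IZR at 1. rewrite Rmin_IZR; auto.
Qed.
Lemma Pp_eq : sumr (fun i => Rmax 0 (sq (i + 2))) 29 = IZR Ppz / D.
Proof.
  pose proof D_pos. unfold Ppz. rewrite <- sumr_IZR by lra. apply sumr_ext. intros i Hi.
  rewrite !sq_D by lia. rewrite zero_IZR at 1. rewrite Rmax_IZR; auto.
Qed.
Lemma Nn_eq : sumr (fun i => Rmax 0 (- sq (i + 2))) 29 = IZR Nnz / D.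
Proof.
  pose proof D_pos. unfold Nnz. rewrite <- sumr_IZR by lra. apply sumr_ext. intros i Hi.
  rewrite !sq_D by lia. replace (- (IZR (sD (i + 2)) / D)) with (IZR (- sD (i + 2)) / D)
    by (rewrite opp_IZR; unfold Rdiv; try ring).
  rewrite zero_IZR at 1. rewrite Rmax_IZR; auto.
Qed.
Lemma tau_eq : tau P Q g1 g2 = IZR tauz / D.
Proof.
  pose proof D_pos. unfold tau, tauz. rewrite !sq_D by lia.
  unfold Rdiv. rewrite !Rabs_mult, !(Rabs_right (/ D)) by (apply Rle_ge, Rlt_le, Rinv_0_lt_compat; auto).
  rewrite !Rabs_Zabs. rewrite mult_IZR, plus_IZR.
  generalize (IZR (Z.abs (sD 31))) (IZR (Z.abs (sD 32))) D. intros. ring.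
Qed.
Lemma g1_eq : g1 = IZR g1D / D.
Proof.
  pose proof D_pos. unfold g1D, pw, D. rewrite mult_IZR, <- pow_IZR, E1. simpl (IZR 3). field.
Qed.
Lemma s2max_eq : Rmax 0 (sq 2) = IZR (Z.max 0 (sD 2)) / D.
Proof. pose proof D_pos. rewrite sq_D by lia. rewrite zero_IZR at 1. apply Rmax_IZR; auto. Qed.
Lemma s2min_eq : Rmin 0 (sq 2) = IZR (Z.min 0 (sD 2)) / D.
Proof. pose proof D_pos. rewrite sq_D by lia. rewrite zero_IZR at 1. apply Rmin_IZR; auto. Qed.

Lemma aux1 (g Y X s t D' : R) : 0 < D' -> 0 < 2 * g + Y - X - s - 6 * t ->
  2 * (g / D') + Y / D' - X / D' - s / D' - 6 * (t / D') > 0.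
Proof.
  intros HD H. replace (2 * (g / D') + Y / D' - X / D' - s / D' - 6 * (t / D')) with ((2 * g + Y - X - s - 6 * t) / D')
    by (field; lra). apply Rdiv_lt_0_compat; auto.
Qed.
Lemma aux2 (g Y X s t D' : R) : 0 < D' -> 0 < 2 * g + Y - X + s - 6 * t ->
  2 * (g / D') + Y / D' - X / D' + s / D' - 6 * (t / D') > 0.
Proof.
  intros HD H. replace (2 * (g / D') + Y / D' - X / D' + s / D' - 6 * (t / D')) with ((2 * g + Y - X + s - 6 * t) / D')
    by (field; lra). apply Rdiv_lt_0_compat; auto.
Qed.
Lemma aux3 (g A B t D' : R) : 0 < D' -> 0 <= g - A - B - 2 * t ->
  g / D' - A / D' - B / D' - 2 * (t / D') >= 0.
Proof.
  intros HD H. replace (g / D' - A / D' - B / D' - 2 * (t / D')) with ((g - A - B - 2 * t) / D')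
    by (field; lra). apply Rle_ge, Rmult_le_pos; auto. apply Rlt_le, Rinv_0_lt_compat; auto.
Qed.

Lemma check_real : check = true ->
  2 * g1 + sumr (fun i => Rmin 0 (Rmin (sq (i + 3)) (2 * sq (i + 2)))) 29
    - sumr (fun i => Rmax 0 (Rmax (sq (i + 3)) (2 * sq (i + 2)))) 29 - Rmax 0 (sq 2) - 6 * tau P Q g1 g2 > 0 /\
  2 * g1 + sumr (fun i => Rmin 0 (Rmin (sq (i + 3)) (-2 * sq (i + 2)))) 29
    - sumr (fun i => Rmax 0 (Rmax (sq (i + 3)) (-2 * sq (i + 2)))) 29 + Rmin 0 (sq 2) - 6 * tau P Q g1 g2 > 0 /\
  g1 - sumr (fun i => Rmax 0 (sq (i + 2))) 29 - sumr (fun i => Rmax 0 (- sq (i + 2))) 29 - 2 * tau P Q g1 g2 >= 0.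
Proof.
  intros Hc. unfold check in Hc. apply andb_prop in Hc as [Hc H3]. apply andb_prop in Hc as [H1 H2].
  apply Z.ltb_lt in H1. apply Z.ltb_lt in H2. apply Z.leb_le in H3.
  apply IZR_lt in H1. apply IZR_lt in H2. apply IZR_le in H3.
  unfold cpz, cmz, slz in H1, H2, H3.
  repeat rewrite ?minus_IZR, ?plus_IZR, ?mult_IZR in H1. repeat rewrite ?minus_IZR, ?plus_IZR, ?mult_IZR in H2.
  repeat rewrite ?minus_IZR, ?mult_IZR in H3.
  rewrite (X2_eq 2), (Y2_eq 2), (X2_eq (-2)), (Y2_eq (-2)), Pp_eq, Nn_eq, tau_eq, s2max_eq, s2min_eq, g1_eq.
  split; [|split].
  - apply aux1; [exact D_pos | exact H1].
  - apply aux2; [exact D_pos | exact H2].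
  - apply aux3; [exact D_pos | exact H3].
Qed.

End Num.

Lemma check_1_3 : check 1 1 1 (-1) = true. Proof. vm_compute. reflexivity. Qed.
Lemma check_2_3 : check 2 1 3 (-5) = true. Proof. vm_compute. reflexivity. Qed.
Lemma check_3_3 : check 3 1 1 (-2) = true. Proof. vm_compute. reflexivity. Qed.
Lemma check_1_m3 : check 1 (-1) 1 (-2) = true. Proof. vm_compute. reflexivity. Qed.

End M_K.
Import M_K.

Module M_L.

Lemma max_lin a b K : K >= 2 -> Rmax 0 (Rmax a (K * b)) <= Rmax 0 (Rmax a (2 * b)) + (K - 2) * Rmax 0 b.
Proof.
  intros HK. pose proof (max3 a (2 * b)). pose proof (Rmax_l 0 b); pose proof (Rmax_r 0 b).
  assert (0 <= (K - 2) * Rmax 0 b) by (apply Rmult_le_pos; lra).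
  apply Rmax_lub; [lra|]. apply Rmax_lub; [lra|]. nra.
Qed.
Lemma min_lin a b K : K >= 2 -> Rmin 0 (Rmin a (2 * b)) - (K - 2) * Rmax 0 (- b) <= Rmin 0 (Rmin a (K * b)).
Proof.
  intros HK. pose proof (min3 a (2 * b)). pose proof (Rmax_l 0 (- b)); pose proof (Rmax_r 0 (- b)).
  assert (0 <= (K - 2) * Rmax 0 (- b)) by (apply Rmult_le_pos; lra).
  apply Rmin_glb; [lra|]. apply Rmin_glb; [lra|]. nra.
Qed.
Lemma max_lin' a b K : K <= -2 -> Rmax 0 (Rmax a (K * b)) <= Rmax 0 (Rmax a (-2 * b)) + (- K - 2) * Rmax 0 (- b).
Proof.
  intros HK. pose proof (max3 a (-2 * b)). pose proof (Rmax_l 0 (- b)); pose proof (Rmax_r 0 (- b)).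
  assert (0 <= (- K - 2) * Rmax 0 (- b)) by (apply Rmult_le_pos; lra).
  apply Rmax_lub; [lra|]. apply Rmax_lub; [lra|]. nra.
Qed.
Lemma min_lin' a b K : K <= -2 -> Rmin 0 (Rmin a (-2 * b)) - (- K - 2) * Rmax 0 b <= Rmin 0 (Rmin a (K * b)).
Proof.
  intros HK. pose proof (min3 a (-2 * b)). pose proof (Rmax_l 0 b); pose proof (Rmax_r 0 b).
  assert (0 <= (- K - 2) * Rmax 0 b) by (apply Rmult_le_pos; lra).
  apply Rmin_glb; [lra|]. apply Rmin_glb; [lra|]. nra.
Qed.

Section Gap.
Variables P Q K g1 g2 : R.
Notation sq := (sq P Q g1 g2).
Notation tau := (tau P Q g1 g2).
Let X c := sumr (fun i => Rmax 0 (Rmax (sq (i + 3)) (c * sq (i + 2)))) 29.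
Let Y c := sumr (fun i => Rmin 0 (Rmin (sq (i + 3)) (c * sq (i + 2)))) 29.
Let Pp := sumr (fun i => Rmax 0 (sq (i + 2))) 29.
Let Nn := sumr (fun i => Rmax 0 (- sq (i + 2))) 29.

Lemma gap_pos :
  K >= 2 ->
  2 * g1 + Y 2 - X 2 - Rmax 0 (sq 2) - 6 * tau > 0 ->
  g1 - Pp - Nn - 2 * tau >= 0 ->
  K * g1 + Lo P Q K g1 g2 > Rmax 0 (sq 2) + Hi P Q K g1 g2.
Proof.
  intros HK H1 H2. unfold Lo, Hi.
  assert (A1 : sumr (mx P Q K g1 g2) 29 <= X 2 + (K - 2) * Pp).
  { unfold X, Pp. rewrite <- sumr_scal, <- sumr_plus. apply sumr_le. intros; apply max_lin; auto. }
  assert (A2 : Y 2 - (K - 2) * Nn <= sumr (mn P Q K g1 g2) 29).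
  { replace (Y 2 - (K - 2) * Nn) with (sumr (fun i => Rmin 0 (Rmin (sq (i + 3)) (2 * sq (i + 2))) + (-(K - 2)) * Rmax 0 (- sq (i + 2))) 29)
      by (rewrite sumr_plus, sumr_scal; unfold Y, Nn; ring).
    apply sumr_le. intros; pose proof (min_lin (sq (i + 3)) (sq (i + 2)) K HK). unfold mn. lra. }
  rewrite Rabs_right by lra.
  assert (0 <= (K - 2) * (g1 - Pp - Nn - 2 * tau)) by (apply Rmult_le_pos; lra).
  nra.
Qed.

Lemma gap_neg :
  K <= -2 ->
  2 * g1 + Y (-2) - X (-2) + Rmin 0 (sq 2) - 6 * tau > 0 ->
  g1 - Pp - Nn - 2 * tau >= 0 ->
  K * g1 + Hi P Q K g1 g2 < Rmin 0 (sq 2) + Lo P Q K g1 g2.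
Proof.
  intros HK H1 H2. unfold Lo, Hi.
  assert (A1 : sumr (mx P Q K g1 g2) 29 <= X (-2) + (- K - 2) * Nn).
  { unfold X, Nn. rewrite <- sumr_scal, <- sumr_plus. apply sumr_le. intros; apply max_lin'; auto. }
  assert (A2 : Y (-2) - (- K - 2) * Pp <= sumr (mn P Q K g1 g2) 29).
  { replace (Y (-2) - (- K - 2) * Pp) with (sumr (fun i => Rmin 0 (Rmin (sq (i + 3)) (-2 * sq (i + 2))) + (-(- K - 2)) * Rmax 0 (sq (i + 2))) 29)
      by (rewrite sumr_plus, sumr_scal; unfold Y, Pp; ring).
    apply sumr_le. intros; pose proof (min_lin' (sq (i + 3)) (sq (i + 2)) K HK). unfold mn. lra. }
  rewrite Rabs_left by lra.
  assert (0 <= (- K - 2) * (g1 - Pp - Nn - 2 * tau)) by (apply Rmult_le_pos; lra).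
  nra.
Qed.

End Gap.

Lemma disc_case P Q g1 g2 pz qz g1z g2z (K : R) :
  adm P Q -> P = IZR pz -> Q = IZR (3 * qz) -> (qz = 1 \/ qz = -1)%Z -> g1 = IZR g1z -> g2 = IZR g2z ->
  check pz qz g1z g2z = true -> (K >= 2 \/ K <= -2) -> ~ connected2 (Tset P Q K).
Proof.
  intros HPQ EP EQ Eq E1 E2 Hc HK.
  destruct (check_real pz qz g1z g2z P Q g1 g2 HPQ EP EQ Eq E1 E2 Hc) as [C1 [C2 C3]].
  apply (disc_main P Q K g1 g2 HPQ). destruct HK as [HK|HK].
  - left. apply gap_pos; auto.
  - right. apply gap_neg; auto.
Qed.

End M_L.
Import M_L.


Lemma adm_cases p q : adm (IZR p) (IZR q) ->
  ((p = 1 /\ q = 3) \/ (p = 2 /\ q = 3) \/ (p = 3 /\ q = 3) \/ (p = 1 /\ q = -3))%Z.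
Proof.
  intros [[H1 [H2|[H2|H2]]]|[H1 H2]];
  apply eq_IZR in H1; apply eq_IZR in H2; subst; tauto.
Qed.

Theorem theorem3p2 (a b c d p q k : Z) (v : R * R) :
  expanding (matZ a b c d) ->
  (- (a + d))%Z = p -> (a * d - b * c)%Z = q ->
  (0 < p)%Z -> (q = 3 \/ q = -3)%Z ->
  k <> 0%Z ->
  lin_indep2 v (mapply (matZ a b c d) v) ->
  (connected2
     (self_affine_set (matZ a b c d)
        (pzero :: v :: pscale (IZR k) (mapply (matZ a b c d) v) :: nil))
   <-> (k = 1 \/ k = -1)%Z).
Proof.
  intros He Hp Hq Hp0 Hq3 Hk Hli.
  pose proof (adm_of a b c d p q He Hp Hq Hp0 Hq3) as HPQ.
  eapply iff_trans; [exact (conn_transfer a b c d p q k v Hp Hq HPQ Hli)|].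
  change (self_affine_set (Bm (IZR p) (IZR q)) (DB (IZR k))) with (Tset (IZR p) (IZR q) (IZR k)).
  assert (HK : (k = 1 \/ k = -1)%Z \/ (IZR k >= 2 \/ IZR k <= -2)).
  { destruct (Z.eq_dec k 1); [left; left; auto|]. destruct (Z.eq_dec k (-1)); [left; right; auto|].
    right. assert (k >= 2 \/ k <= -2)%Z as [H|H] by lia; [left; apply Rle_ge, IZR_le; lia|right; apply IZR_le; lia]. }
  destruct (adm_cases p q HPQ) as [[-> ->]|[[-> ->]|[[-> ->]|[-> ->]]]];
    (split; [intros HC; destruct HK as [HK|HK]; [exact HK|exfalso; revert HC]|]).
  - exact (disc_case (IZR 1) (IZR 3) (IZR 1) (IZR (-1)) 1 1 1 (-1) (IZR k) HPQ eq_refl eq_refl ltac:(lia) eq_refl eq_refl check_1_3 HK).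
  - intros [-> | ->].
    + apply conn_main; auto; [apply edge_1_3_1_01|left; apply edge_1_3_1_02].
    + apply conn_main; auto; [apply edge_1_3_m1_01|right; apply edge_1_3_m1_12].
  - exact (disc_case (IZR 2) (IZR 3) (IZR 3) (IZR (-5)) 2 1 3 (-5) (IZR k) HPQ eq_refl eq_refl ltac:(lia) eq_refl eq_refl check_2_3 HK).
  - intros [-> | ->].
    + apply conn_main; auto; [apply edge_2_3_1_01|left; apply edge_2_3_1_02].
    + apply conn_main; auto; [apply edge_2_3_m1_01|right; apply edge_2_3_m1_12].
  - exact (disc_case (IZR 3) (IZR 3) (IZR 1) (IZR (-2)) 3 1 1 (-2) (IZR k) HPQ eq_refl eq_refl ltac:(lia) eq_refl eq_refl check_3_3 HK).
  - intros [-> | ->].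
    + apply conn_main; auto; [apply edge_3_3_1_01|left; apply edge_3_3_1_02].
    + apply conn_main; auto; [apply edge_3_3_m1_01|right; apply edge_3_3_m1_12].
  - exact (disc_case (IZR 1) (IZR (-3)) (IZR 1) (IZR (-2)) 1 (-1) 1 (-2) (IZR k) HPQ eq_refl eq_refl ltac:(lia) eq_refl eq_refl check_1_m3 HK).
  - intros [-> | ->].
    + apply conn_main; auto; [apply edge_1_m3_1_01|left; apply edge_1_m3_1_02].
    + apply conn_main; auto; [apply edge_1_m3_m1_01|right; apply edge_1_m3_m1_12].
Qed.
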